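(* Consider momentum gradient flow on a 2-layer diagonal linear network as described in the context, and assume that the trajectory $(u_t,v_t)_{t\ge0}$ is bounded and that the asymptotic balancedness $\Delta_\infty=\lim_{t\to\infty}\Delta_t$ has all coordinates nonzero. Then, for every coordinate $k\in[d]$, the quantities $$\Omega_\pm(k)=\int_0^\infty \mathrm{m.p.v.}\int_0^t\Big(\frac{\dot w_{\pm,s}(k)}{w_{\pm,s}(k)}\Big)^2 e^{-\frac{t-s}{\lambda}}\,\mathrm{sgn}\big(w_{\pm,t}(k)\,w_{\pm,s}(k)\big)\,\mathrm{d}s\,\mathrm{d}t$$ are well-defined and finite.
   Context: Data: $x_1,\dots,x_n\in\mathbb{R}^d$, $y\in\mathbb{R}^n$, loss $L(\theta)=\frac{1}{2n}\sum_{i=1}^n(y_i-\langle x_i,\theta\rangle)^2$. All vector operations (products, powers, $|\cdot|$, $\exp$, $\mathrm{sgn}$, inequalities) are coordinate-wise; $z(k)$ is the $k$-th coordinate. Fix $\lambda>0$. Momentum gradient flow on the diagonal linear network is the solution $(u_t,v_t)$ of $\lambda\ddot u_t+\dot u_t+\nabla L(\theta_t)\odot v_t=0$, $\lambda\ddot v_t+\dot v_t+\nabla L(\theta_t)\odot u_t=0$, $\theta_t=u_t\odot v_t$, with $\dot u_0=\dot v_0=0$ and $(u_0,v_0)$ such that $|u_0^2-v_0^2|$ has all coordinates nonzero. Set $w_{\pm,t}=u_t\pm v_t$ and balancedness $\Delta_t=|u_t^2-v_t^2|$. Under the hypotheses, each coordinate of $w_{\pm,t}$ vanishes at only finitely many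 times, so the integrands above have finitely many poles. Modified principal value: for a scalar function $f$ on $[0,\infty)$ continuous except at finitely many poles, for a pole $T$ and $\epsilon>0$ small enough that $T$ is the only pole in $(T-\epsilon,T+\epsilon)$, $\mathrm{m.p.v.}\int_{T-\epsilon}^{T+\epsilon}f=\lim_{\delta\to0}\big[e^{\delta/\lambda}\int_{T-\epsilon}^{T-\delta}f+e^{-\delta/\lambda}\int_{T+\delta}^{T+\epsilon}f\big]$; for $\tau$ not a pole, $\mathrm{m.p.v.}\int_0^\tau f$ is the sum of these m.p.v.'s over small neighbourhoods of the poles in $(0,\tau)$ plus the ordinary integrals of $f$ over the remaining pieces of $[0,\tau]$ (so it equals the ordinary integral when there are no poles). *)

(* Defs.v *)
From Stdlib Require Import Reals Lra Lia List Sorting.Sorted.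
From Coquelicot Require Import Coquelicot.
Open Scope R_scope.

Fixpoint sumR (m : nat) (f : nat -> R) : R :=
  match m with
  | O => 0
  | S m' => sumR m' f + f m'
  end.

(* Gradient of L(theta) = 1/(2n) sum_i (y_i - <x_i,theta>)^2, coordinate k.
   Data: x i j = j-th coordinate of x_i (i < n, j < d), y i = y_i. *)
Definition gradL (n d : nat) (x : nat -> nat -> R) (y : nat -> R)
  (theta : nat -> R) (k : nat) : R :=
  - (1 / INR n) * sumR n (fun i => (y i - sumR d (fun j => x i j * theta j)) * x i k).

Definition sgn (r : R) : R :=
  if Rlt_dec 0 r then 1 else if Rlt_dec r 0 then -1 else 0.

(* m.p.v. contribution of a pole T on (T-eps, T+eps):
   lim_{delta -> 0+} [e^{delta/lam} int_{T-eps}^{T-delta} f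
                      + e^{-delta/lam} int_{T+delta}^{T+eps} f] = l *)
Definition pole_lim (lam : R) (f : R -> R) (T eps l : R) : Prop :=
  (forall delta, 0 < delta < eps ->
     ex_RInt f (T - eps) (T - delta) /\ ex_RInt f (T + delta) (T + eps)) /\
  filterlim (fun delta => exp (delta / lam) * RInt f (T - eps) (T - delta)
                          + exp (- delta / lam) * RInt f (T + delta) (T + eps))
            (at_right 0) (locally l).

Fixpoint pole_sep (a : R) (P : list R) (b eps : R) : Prop :=
  match P with
  | nil => a <= b
  | p :: P' => a <= p - eps /\ pole_sep (p + eps) P' b eps
  end.

Fixpoint mpv_pieces (lam : R) (f : R -> R) (a : R) (P : list R) (b eps l : R)
  : Prop :=
  match P with
  | nil => is_RInt f a b l
  | p :: P' => exists l1 l2 l3,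
      is_RInt f a (p - eps) l1 /\ pole_lim lam f p eps l2 /\
      mpv_pieces lam f (p + eps) P' b eps l3 /\ l = l1 + l2 + l3
  end.

(* m.p.v. int_a^b f = l, where the poles of f are the points s with Zs s;
   the poles in (a,b) are finitely many, listed increasingly in P. *)
Definition is_mpv (lam : R) (f : R -> R) (Zs : R -> Prop) (a b l : R) : Prop :=
  exists P : list R,
    Sorted Rlt P /\ (forall s, In s P <-> (a < s < b /\ Zs s)) /\
    exists eps0, 0 < eps0 /\
      forall eps, 0 < eps < eps0 ->
        pole_sep a P b eps /\ mpv_pieces lam f a P b eps l.

Definition omega_integrand (lam : R) (w dw : R -> R) (t : R) : R -> R :=
  fun s => (dw s / w s) ^ 2 * exp (- (t - s) / lam) * sgn (w t * w s).

(* Omega = int_0^oo m.p.v. int_0^t (...) ds dt is well-defined and finite: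
   w has finitely many zeros on [0,oo); for each non-pole t the inner m.p.v.
   exists (value I t); the outer integral, taken as lim_{tau->oo} of the
   m.p.v. int_0^tau I, exists and is a real number Omega. *)
Definition Omega_well_defined_finite (lam : R) (w dw : R -> R) : Prop :=
  (exists Z : list R, forall t, 0 <= t -> (w t = 0 <-> In t Z)) /\
  exists I : R -> R,
    (forall t, 0 <= t -> w t <> 0 ->
       is_mpv lam (omega_integrand lam w dw t) (fun s => w s = 0) 0 t (I t)) /\
    exists J : R -> R,
      (forall tau, 0 <= tau -> w tau <> 0 ->
         is_mpv lam I (fun s => w s = 0) 0 tau (J tau)) /\
      exists Omega : R, filterlim J (Rbar_locally p_infty) (locally Omega).

(* Main.v *)
Require Import Defs.
From Stdlib Require Import Reals Lra Psatz List Sorting.Sorted ClassicalEpsilon FunctionalExtensionality.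
From Coquelicot Require Import Coquelicot.
Open Scope R_scope.


Lemma Dc (f : R -> R) x l : is_derive f x l -> continuous f x.
Proof. intros H. apply (@ex_derive_continuous R_AbsRing R_NormedModule). exists l; exact H. Qed.

Definition HL (f : R -> R) (l : R) := filterlim f (at_right 0) (locally l).

Lemma HL_iff f l : HL f l <->
  (forall eps : R, 0 < eps -> exists eta, 0 < eta /\ forall d, 0 < d < eta -> Rabs (f d - l) < eps).
Proof.
  unfold HL; split.
  - intros H eps Heps.
    assert (H1 := proj1 (filterlim_locally f l) H (mkposreal eps Heps)).
    destruct H1 as [[eta Heta] He]. exists eta. split; [exact Heta|].
    intros d Hd. specialize (He d).
    assert (Hb : ball 0 eta d).
    { unfold ball; simpl; unfold AbsRing_ball, abs, minus, plus, opp; simpl.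
      rewrite Rabs_right; lra. }
    specialize (He Hb (proj1 Hd)). unfold ball in He; simpl in He.
    unfold AbsRing_ball, abs, minus, plus, opp in He; simpl in He. exact He.
  - intros H. apply (proj2 (filterlim_locally f l)). intros [eps Heps].
    destruct (H eps Heps) as [eta [Heta He]].
    exists (mkposreal eta Heta). intros d Hd Hpos.
    unfold ball; simpl; unfold AbsRing_ball, abs, minus, plus, opp; simpl.
    apply He. split; [exact Hpos|].
    unfold ball in Hd; simpl in Hd; unfold AbsRing_ball, abs, minus, plus, opp in Hd; simpl in Hd.
    rewrite Ropp_0, Rplus_0_r in Hd. apply Rabs_lt_between in Hd. lra.
Qed.

Lemma HL_const c : HL (fun _ => c) c.
Proof. apply filterlim_const. Qed.

Lemma HL_id : HL (fun d => d) 0.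
Proof.
  apply HL_iff. intros eps He. exists eps. split; auto. intros d Hd.
  rewrite Rminus_0_r, Rabs_right; lra.
Qed.

Lemma HL_plus f g a b : HL f a -> HL g b -> HL (fun d => f d + g d) (a + b).
Proof.
  intros Hf Hg. unfold HL.
  apply (filterlim_comp_2 f g Rplus Hf Hg). apply (filterlim_plus a b).
Qed.

Lemma HL_mult f g a b : HL f a -> HL g b -> HL (fun d => f d * g d) (a * b).
Proof.
  intros Hf Hg. unfold HL.
  apply (filterlim_comp_2 f g Rmult Hf Hg). apply (filterlim_mult a b).
Qed.

Lemma HL_ext f g l : (exists r, 0 < r /\ forall d, 0 < d < r -> f d = g d) -> HL f l -> HL g l.
Proof.
  intros [r [Hr He]] Hf. unfold HL. apply filterlim_ext_loc with f; auto.
  exists (mkposreal r Hr). intros y Hy Hp. apply He. split; auto.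
  unfold ball in Hy; simpl in Hy; unfold AbsRing_ball, abs, minus, plus, opp in Hy; simpl in Hy.
  rewrite Ropp_0, Rplus_0_r in Hy. apply Rabs_lt_between in Hy. lra.
Qed.

Lemma HL_unique f a b : HL f a -> HL f b -> a = b.
Proof.
  intros Ha Hb. rewrite HL_iff in Ha, Hb.
  destruct (Req_dec a b) as [E|E]; auto. exfalso.
  assert (He : 0 < Rabs (a - b) / 2) by (apply Rdiv_lt_0_compat; [apply Rabs_pos_lt; lra|lra]).
  destruct (Ha _ He) as [e1 [He1 H1]]. destruct (Hb _ He) as [e2 [He2 H2]].
  set (d := Rmin e1 e2 / 2).
  assert (0 < Rmin e1 e2) by (apply Rmin_pos; auto).
  assert (Rmin e1 e2 <= e1) by apply Rmin_l. assert (Rmin e1 e2 <= e2) by apply Rmin_r.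
  specialize (H1 d). specialize (H2 d). unfold d in *.
  assert (A1 : Rabs (f (Rmin e1 e2 / 2) - a) < Rabs (a - b) / 2) by (apply H1; lra).
  assert (A2 : Rabs (f (Rmin e1 e2 / 2) - b) < Rabs (a - b) / 2) by (apply H2; lra).
  assert (Rabs (a - b) <= Rabs (f (Rmin e1 e2 / 2) - a) + Rabs (f (Rmin e1 e2 / 2) - b)).
  { replace (a - b) with (-(f (Rmin e1 e2 / 2) - a) + (f (Rmin e1 e2 / 2) - b)) by ring.
    eapply Rle_trans; [apply Rabs_triang|]. rewrite Rabs_Ropp; lra. }
  lra.
Qed.

Lemma HL_comp f g l : HL f l -> continuous g l -> HL (fun d => g (f d)) (g l).
Proof. intros Hf Hg. unfold HL. eapply filterlim_comp; eauto. Qed.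

Lemma HL_opp f a : HL f a -> HL (fun d => - f d) (- a).
Proof.
  intros H. apply (HL_ext (fun d => (-1) * f d)). exists 1; split; [lra|]; intros; ring.
  replace (-a) with ((-1)*a) by ring. apply HL_mult; auto. apply HL_const.
Qed.

Lemma HL_minus f g a b : HL f a -> HL g b -> HL (fun d => f d - g d) (a - b).
Proof. intros. apply HL_plus; auto. apply HL_opp; auto. Qed.

Lemma HL_inv f a : HL f a -> a <> 0 -> HL (fun d => / f d) (/ a).
Proof.
  intros H Ha. apply (HL_comp f Rinv a H).
  apply (Dc _ _ (- (1) / a ^ 2)). apply (is_derive_inv (fun t => t)).
  apply (is_derive_id a). auto. 
Qed.

Lemma HL_shift g x0 : continuous g x0 -> HL (fun d => g (x0 + d)) (g x0).
Proof.
  intros Hg. apply (HL_comp (fun d => x0 + d) g x0); auto.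
  replace x0 with (x0 + 0) at 1 by ring. apply (HL_plus (fun _ => x0) (fun d => d)).
  apply HL_const. apply HL_id.
Qed.

Lemma HL_shiftm g x0 : continuous g x0 -> HL (fun d => g (x0 - d)) (g x0).
Proof.
  intros Hg. apply (HL_comp (fun d => x0 - d) g x0); auto.
  replace x0 with (x0 - 0) at 1 by ring. apply (HL_minus (fun _ => x0) (fun d => d)).
  apply HL_const. apply HL_id.
Qed.


Lemma HL_scal1 f c : HL f 1 -> HL (fun d => f d * c) c.
Proof. intros H. assert (E := HL_mult f (fun _ => c) 1 c H (HL_const c)). rewrite Rmult_1_l in E. exact E. Qed.

Definition pole_ok (lam : R) (f : R -> R) (p : R) : Prop :=
  exists rho, 0 < rho /\ exists FL FR : R -> R,
  (forall s, p - rho <= s < p -> is_derive FL s (f s)) /\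
  (forall s, p < s <= p + rho -> is_derive FR s (f s)) /\
  exists K, HL (fun d => exp (d / lam) * FL (p - d) - exp (- d / lam) * FR (p + d)) K.

Lemma HL_exp_c c : HL (fun d => exp (c * d)) 1.
Proof.
  assert (H : HL (fun d => c * d) 0).
  { replace 0 with (c * 0) by ring. apply HL_mult; [apply HL_const|apply HL_id]. }
  rewrite <- exp_0. apply (HL_comp _ exp 0 H). eapply Dc; apply is_derive_exp.
Qed.

Lemma RInt_der (F f : R -> R) a b :
  (forall z, Rmin a b <= z <= Rmax a b -> is_derive F z (f z)) ->
  (forall z, Rmin a b <= z <= Rmax a b -> continuous f z) ->
  is_RInt f a b (F b - F a).
Proof.
  intros H1 H2. apply (@is_RInt_derive R_CompleteNormedModule F f a b H1 H2).
Qed.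

Lemma cont_RInt (f : R -> R) a b : (forall z, Rmin a b <= z <= Rmax a b -> continuous f z) -> is_RInt f a b (RInt f a b).
Proof. intros H. apply (@RInt_correct R_CompleteNormedModule). apply (@ex_RInt_continuous R_CompleteNormedModule). exact H. Qed.

Lemma RI_scal (f : R -> R) a b c l : is_RInt f a b l -> is_RInt (fun s => c * f s) a b (c * l).
Proof. intros H. exact (is_RInt_scal f a b c l H). Qed.

Lemma RI_unique (f : R -> R) a b l : is_RInt f a b l -> RInt f a b = l.
Proof. apply (@is_RInt_unique R_CompleteNormedModule). Qed.

Lemma pole_piece lam f p rho FL FR K :
  0 < lam -> 0 < rho ->
  (forall s, p - rho <= s < p -> is_derive FL s (f s)) ->
  (forall s, p < s <= p + rho -> is_derive FR s (f s)) ->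
  HL (fun d => exp (d / lam) * FL (p - d) - exp (- d / lam) * FR (p + d)) K ->
  (forall z, p - rho <= z <= p + rho -> z <> p -> continuous f z) ->
  forall eps, 0 < eps <= rho -> pole_lim lam f p eps (K - FL (p - eps) + FR (p + eps)).
Proof.
  intros Hl Hr HFL HFR HK Hc eps He.
  assert (IL : forall dl, 0 < dl < eps -> is_RInt f (p - eps) (p - dl) (FL (p - dl) - FL (p - eps))).
  { intros dl Hd. apply RInt_der; intros z Hz;
      rewrite Rmin_left in Hz by lra; rewrite Rmax_right in Hz by lra.
    apply HFL; lra. apply Hc; lra. }
  assert (IR : forall dl, 0 < dl < eps -> is_RInt f (p + dl) (p + eps) (FR (p + eps) - FR (p + dl))).
  { intros dl Hd. apply RInt_der; intros z Hz;
      rewrite Rmin_left in Hz by lra; rewrite Rmax_right in Hz by lra.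
    apply HFR; lra. apply Hc; lra. }
  split.
  - intros dl Hd. split; eexists; [apply IL|apply IR]; auto.
  - fold (HL (fun delta => exp (delta / lam) * RInt f (p - eps) (p - delta) +
        exp (- delta / lam) * RInt f (p + delta) (p + eps)) (K - FL (p - eps) + FR (p + eps))).
    apply HL_ext with (fun d => (exp (d / lam) * FL (p - d) - exp (- d / lam) * FR (p + d))
       - exp ((/lam) * d) * FL (p - eps) + exp ((- / lam) * d) * FR (p + eps)).
    { exists eps. split; [lra|]. intros dl Hd.
      rewrite (RI_unique _ _ _ _ (IL dl Hd)), (RI_unique _ _ _ _ (IR dl Hd)).
      replace (/ lam * dl) with (dl / lam) by (unfold Rdiv; ring).
      replace (- / lam * dl) with (- dl / lam) by (unfold Rdiv; ring). ring. }
    apply HL_plus. apply HL_minus. exact HK.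
    apply HL_scal1, HL_exp_c. apply HL_scal1, HL_exp_c.
Qed.

Lemma pole_sep_mono a0 a P b eps : pole_sep a P b eps -> a0 <= a -> pole_sep a0 P b eps.
Proof. destruct P; simpl; intros; try lra. destruct H; split; auto; lra. Qed.

Lemma mpv_shift lam f a0 a P b eps l r :
  mpv_pieces lam f a P b eps l -> is_RInt f a0 a r -> mpv_pieces lam f a0 P b eps (r + l).
Proof.
  destruct P as [|p P']; simpl; intros H Hr.
  - apply (is_RInt_Chasles f a0 a b r l Hr H).
  - destruct H as [l1 [l2 [l3 [H1 [H2 [H3 H4]]]]]].
    exists (r + l1), l2, l3. split; [|split; [auto|split; [auto|lra]]].
    apply (is_RInt_Chasles f a0 a (p - eps) r l1 Hr H1).
Qed.

Lemma StronglySorted_Rlt P : Sorted Rlt P -> StronglySorted Rlt P.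
Proof. apply Sorted_StronglySorted. intros x y z; apply Rlt_trans. Qed.

Lemma GM_ind lam f (Zs : R -> Prop) b : 0 < lam -> ~ Zs b -> forall P a,
  a <= b -> ~ Zs a -> Sorted Rlt P ->
  (forall s, In s P <-> a < s < b /\ Zs s) ->
  (forall z, a <= z <= b -> ~ Zs z -> continuous f z) ->
  (forall p, In p P -> pole_ok lam f p) ->
  exists l eps0, 0 < eps0 /\ forall eps, 0 < eps < eps0 ->
    pole_sep a P b eps /\ mpv_pieces lam f a P b eps l.
Proof.
  intros Hlam Hb P. induction P as [|p P' IH]; intros a Hab Ha HS HP Hc Hpo.
  - exists (RInt f a b), 1. split; [lra|]. intros eps He. simpl. split; auto.
    apply cont_RInt. intros z Hz. rewrite Rmin_left in Hz by lra; rewrite Rmax_right in Hz by lra.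
    apply Hc; auto. intros Hz'.
    destruct (Req_dec z a) as [->|Hza]; auto. destruct (Req_dec z b) as [->|Hzb]; auto.
    apply (proj2 (HP z)); auto. split; auto; lra.
  - assert (HSS := StronglySorted_Rlt _ HS). inversion HSS as [|? ? HS' HF]; subst.
    assert (HF' : forall s, In s P' -> p < s). { intros s Hs. eapply Forall_forall in HF; eauto. }
    assert (Hp : a < p < b /\ Zs p) by (apply HP; left; auto).
    set (nx := match P' with nil => b | s :: _ => s end).
    assert (Hnx : p < nx /\ nx <= b /\ forall s, In s P' -> nx <= s).
    { unfold nx; destruct P' as [|s P'']. split; [lra|split; [lra|intros s []]].
      assert (Hs : a < s < b /\ Zs s) by (apply HP; right; left; auto).
      split; [apply HF'; left; auto|split; [lra|]].
      intros s' Hs'. destruct Hs' as [<-|Hs']. lra.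
      inversion HS'; subst. eapply Forall_forall in H2; eauto. lra. }
    destruct (Hpo p (or_introl eq_refl)) as [rho [Hrho [FL [FR [HFL [HFR [K HK]]]]]]].
    set (r := Rmin rho (Rmin ((p - a) / 2) ((nx - p) / 2))).
    assert (Hr : 0 < r /\ r <= rho /\ r <= (p - a) / 2 /\ r <= (nx - p) / 2).
    { unfold r. repeat split.
      apply Rmin_pos; auto. apply Rmin_pos; lra.
      apply Rmin_l. eapply Rle_trans; [apply Rmin_r|apply Rmin_l].
      eapply Rle_trans; [apply Rmin_r|apply Rmin_r]. }
    assert (Hnz : forall z, a < z < b -> z < nx -> z <> p -> ~ Zs z).
    { intros z Hz Hz2 Hzp HZ. assert (In z (p :: P')) by (apply HP; auto).
      destruct H as [H|H]. auto. specialize (proj2 (proj2 Hnx) z H). lra. }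
    assert (Hcz : forall z, a <= z <= b -> z < nx -> z <> p -> continuous f z).
    { intros z Hz Hz2 Hzp. apply Hc; auto. intros HZ.
      destruct (Req_dec z a) as [->|Hza]; auto. destruct (Req_dec z b) as [->|Hzb]; auto.
      apply (Hnz z); auto; lra. }
    destruct (IH (p + r)) as [l' [e0 [He0 Hl']]].
    + lra.
    + apply Hnz; lra.
    + inversion HS; auto.
    + intros s. split.
      * intros Hs. assert (a < s < b /\ Zs s) by (apply HP; right; auto).
        specialize (proj2 (proj2 Hnx) s Hs). destruct Hnx as [N1 [N2 N3]].
        destruct Hr as [R1 [R2 [R3 R4]]]. split; [lra|tauto].
      * intros [Hs1 Hs2]. assert (In s (p :: P')) by (apply HP; split; auto; lra).
        destruct H; auto. destruct Hr as [R1 _]. lra.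
    + intros z Hz HZ. apply Hc; auto. destruct Hr as [R1 _]. lra.
    + intros q Hq. apply Hpo. right; auto.
    + exists (RInt f a (p - r) + (K - FL (p - r) + FR (p + r)) + l').
      exists (Rmin e0 r). split. apply Rmin_pos; lra.
      intros eps He. assert (He1 : eps < e0) by (eapply Rlt_le_trans; [apply He|apply Rmin_l]).
      assert (He2 : eps < r) by (eapply Rlt_le_trans; [apply He|apply Rmin_r]).
      destruct (Hl' eps (conj (proj1 He) He1)) as [Hs' Hm'].
      split.
      * simpl. split; [lra|]. eapply pole_sep_mono; eauto. lra.
      * simpl.
        exists (RInt f a (p - eps)), (K - FL (p - eps) + FR (p + eps)),
          (RInt f (p + eps) (p + r) + l').
        assert (I1 : is_RInt f (p - r) (p - eps) (FL (p - eps) - FL (p - r))).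
        { apply RInt_der; intros z Hz; rewrite Rmin_left in Hz by lra; rewrite Rmax_right in Hz by lra.
          apply HFL; lra. apply Hcz; lra. }
        assert (I2 : is_RInt f (p + eps) (p + r) (FR (p + r) - FR (p + eps))).
        { apply RInt_der; intros z Hz; rewrite Rmin_left in Hz by lra; rewrite Rmax_right in Hz by lra.
          apply HFR; lra. apply Hcz; lra. }
        assert (I0 : is_RInt f a (p - r) (RInt f a (p - r))).
        { apply cont_RInt; intros z Hz; rewrite Rmin_left in Hz by lra; rewrite Rmax_right in Hz by lra.
          apply Hcz; lra. }
        assert (I01 := is_RInt_Chasles _ _ _ _ _ _ I0 I1).
        split. apply cont_RInt; intros z Hz; rewrite Rmin_left in Hz by lra; rewrite Rmax_right in Hz by lra.
          apply Hcz; lra.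
        split. apply pole_piece with r; auto; try lra.
          intros s Hs; apply HFL; lra. intros s Hs; apply HFR; lra.
          intros z Hz Hzp; apply Hcz; lra.
        split. apply mpv_shift with (p + r); auto. apply cont_RInt.
          intros z Hz; rewrite Rmin_left in Hz by lra; rewrite Rmax_right in Hz by lra. apply Hcz; lra.
        rewrite (RI_unique _ _ _ _ I01), (RI_unique _ _ _ _ I2).
        unfold plus; simpl. ring.
Qed.

Lemma GM lam f (Zs : R -> Prop) a b P : 0 < lam -> a <= b -> ~ Zs a -> ~ Zs b -> Sorted Rlt P ->
  (forall s, In s P <-> a < s < b /\ Zs s) ->
  (forall z, a <= z <= b -> ~ Zs z -> continuous f z) ->
  (forall p, In p P -> pole_ok lam f p) ->
  exists l, is_mpv lam f Zs a b l.
Proof.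
  intros Hl Hab Ha Hb HS HP Hc Hpo.
  destruct (GM_ind lam f Zs b Hl Hb P a Hab Ha HS HP Hc Hpo) as [l [e0 [He0 H]]].
  exists l, P. split; auto. split; auto. exists e0; auto.
Qed.

Lemma sorted_eq : forall P1 P2, StronglySorted Rlt P1 -> StronglySorted Rlt P2 ->
  (forall s, In s P1 <-> In s P2) -> P1 = P2.
Proof.
  induction P1 as [|h1 t1 IH]; intros [|h2 t2] H1 H2 Hi; auto.
  - exfalso; apply (proj2 (Hi h2)); left; auto.
  - exfalso; apply (proj1 (Hi h1)); left; auto.
  - inversion H1 as [|? ? H1' F1]; inversion H2 as [|? ? H2' F2]; subst.
    assert (A1 : forall s, In s t1 -> h1 < s) by (intros s Hs; eapply Forall_forall in F1; eauto).
    assert (A2 : forall s, In s t2 -> h2 < s) by (intros s Hs; eapply Forall_forall in F2; eauto).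
    assert (E : h1 = h2).
    { assert (X1 : In h1 (h2 :: t2)) by (apply Hi; left; auto).
      assert (X2 : In h2 (h1 :: t1)) by (apply Hi; left; auto).
      destruct X1 as [X1|X1]; auto. destruct X2 as [X2|X2]; auto.
      apply A2 in X1; apply A1 in X2; lra. }
    subst h2. f_equal. apply IH; auto. intros s; split; intros Hs.
    + assert (In s (h1 :: t2)) by (apply Hi; right; auto). destruct H; auto.
      apply A1 in Hs; lra.
    + assert (In s (h1 :: t1)) by (apply Hi; right; auto). destruct H; auto.
      apply A2 in Hs; lra.
Qed.

Lemma mpv_unique lam f P : forall a b eps l1 l2,
  mpv_pieces lam f a P b eps l1 -> mpv_pieces lam f a P b eps l2 -> l1 = l2.
Proof.
  induction P as [|p P IH]; simpl; intros a b eps l1 l2 H1 H2.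
  - rewrite <- (RI_unique _ _ _ _ H1). apply RI_unique; auto.
  - destruct H1 as [x1 [x2 [x3 [A1 [A2 [A3 A4]]]]]].
    destruct H2 as [y1 [y2 [y3 [B1 [B2 [B3 B4]]]]]].
    subst. f_equal. f_equal.
    rewrite <- (RI_unique _ _ _ _ A1). apply RI_unique; auto.
    destruct A2 as [_ A2]; destruct B2 as [_ B2]. eapply HL_unique; eauto.
    eapply IH; eauto.
Qed.

Lemma is_mpv_unique lam f Zs a b l1 l2 : is_mpv lam f Zs a b l1 -> is_mpv lam f Zs a b l2 -> l1 = l2.
Proof.
  intros [P1 [S1 [I1 [e1 [He1 H1]]]]] [P2 [S2 [I2 [e2 [He2 H2]]]]].
  assert (P1 = P2).
  { apply sorted_eq; try apply StronglySorted_Rlt; auto. intros s; rewrite I1, I2; tauto. }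
  subst. set (e := Rmin e1 e2 / 2).
  assert (He : 0 < e < e1 /\ e < e2).
  { unfold e. assert (0 < Rmin e1 e2) by (apply Rmin_pos; auto).
    assert (Rmin e1 e2 <= e1) by apply Rmin_l. assert (Rmin e1 e2 <= e2) by apply Rmin_r. lra. }
  destruct (H1 e (proj1 He)) as [_ A]. destruct (H2 e (conj (proj1 (proj1 He)) (proj2 He))) as [_ B].
  eapply mpv_unique; eauto.
Qed.

Lemma pole_sep_ext a P b b' eps : pole_sep a P b eps -> b <= b' -> pole_sep a P b' eps.
Proof.
  revert a. induction P as [|p P IH]; simpl; intros a H Hb. lra.
  destruct H; split; auto.
Qed.

Lemma mpv_ext lam f P : forall a b b' eps l r,
  mpv_pieces lam f a P b eps l -> is_RInt f b b' r -> mpv_pieces lam f a P b' eps (l + r).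
Proof.
  induction P as [|p P IH]; simpl; intros a b b' eps l r H Hr.
  - apply (is_RInt_Chasles f a b b' l r H Hr).
  - destruct H as [x1 [x2 [x3 [A1 [A2 [A3 A4]]]]]].
    exists x1, x2, (x3 + r). split; auto. split; auto. split. eapply IH; eauto. lra.
Qed.

Lemma is_mpv_ext lam f (Zs : R -> Prop) a b b' l : is_mpv lam f Zs a b l -> b <= b' ->
  (forall s, b <= s <= b' -> ~ Zs s) -> (forall s, b <= s <= b' -> continuous f s) ->
  is_mpv lam f Zs a b' (l + RInt f b b').
Proof.
  intros [P [S [I [e [He H]]]]] Hbb HZ Hc.
  exists P. split; auto. split.
  - intros s. rewrite I. split; intros [A B]; split; auto; try lra.
    destruct (Rlt_or_le s b); try lra. exfalso. apply (HZ s); auto; lra.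
  - exists e; split; auto. intros eps Heps. destruct (H eps Heps) as [A B]. split.
    eapply pole_sep_ext; eauto. eapply mpv_ext; eauto.
    apply cont_RInt. intros z Hz; rewrite Rmin_left in Hz by lra; rewrite Rmax_right in Hz by lra; auto.
Qed.

Lemma is_mpv_scal lam f Zs a b l c : is_mpv lam f Zs a b l -> is_mpv lam (fun s => c * f s) Zs a b (c * l).
Proof.
  intros [P [S [I [e [He H]]]]]. exists P. split; auto. split; auto. exists e; split; auto.
  intros eps Heps. destruct (H eps Heps) as [A B]. split; auto. clear A H I S.
  revert a l B. induction P as [|p P IH]; simpl; intros a l B.
  - apply (RI_scal f a b c l B).
  - destruct B as [x1 [x2 [x3 [A1 [A2 [A3 A4]]]]]].
    exists (c * x1), (c * x2), (c * x3). split. apply (RI_scal f a (p - eps) c x1 A1).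
    split. 2: split; [apply IH; auto| subst; ring].
    destruct A2 as [A2 A5]. split.
    + intros dl Hd. destruct (A2 dl Hd) as [[l1 E1] [l2 E2]].
      split; eexists; [apply (RI_scal f _ _ c l1 E1)|apply (RI_scal f _ _ c l2 E2)].
    + fold (HL (fun delta => exp (delta / lam) * RInt (fun s => c * f s) (p - eps) (p - delta) +
        exp (- delta / lam) * RInt (fun s => c * f s) (p + delta) (p + eps)) (c * x2)).
      fold (HL (fun delta => exp (delta / lam) * RInt f (p - eps) (p - delta) +
        exp (- delta / lam) * RInt f (p + delta) (p + eps)) x2) in A5.
      apply HL_ext with (fun d => c * (exp (d / lam) * RInt f (p - eps) (p - d) +
        exp (- d / lam) * RInt f (p + d) (p + eps))).
      exists eps. split. lra. intros dl Hd. destruct (A2 dl Hd) as [[l1 E1] [l2 E2]].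
      rewrite (RI_unique _ _ _ _ E1), (RI_unique _ _ _ _ E2).
      rewrite (RI_unique _ _ _ _ (RI_scal f _ _ c l1 E1)), (RI_unique _ _ _ _ (RI_scal f _ _ c l2 E2)).
      ring.
      apply HL_mult. apply HL_const. auto.
Qed.

Lemma D_plus (f g : R -> R) (x : R) (a b : R) : is_derive f x a -> is_derive g x b -> is_derive (fun t => f t + g t) x (a + b).
Proof. intros. apply (is_derive_plus f g x a b); auto. Qed.
Lemma D_minus (f g : R -> R) (x : R) (a b : R) : is_derive f x a -> is_derive g x b -> is_derive (fun t => f t - g t) x (a - b).
Proof. intros. apply (is_derive_minus f g x a b); auto. Qed.
Lemma D_opp (f : R -> R) (x : R) (a : R) : is_derive f x a -> is_derive (fun t => - f t) x (- a).
Proof. intros. apply (is_derive_opp f x a); auto. Qed.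
Lemma D_mult (f g : R -> R) (x : R) (a b : R) : is_derive f x a -> is_derive g x b -> is_derive (fun t => f t * g t) x (a * g x + f x * b).
Proof. intros. apply (is_derive_mult f g x a b); auto. intros; apply Rmult_comm. Qed.
Lemma D_const (c x : R) : is_derive (fun _ => c) x 0.
Proof. apply (is_derive_const c x). Qed.
Lemma D_id (x : R) : is_derive (fun t => t) x 1.
Proof. apply (is_derive_id x). Qed.
Lemma D_scal (f : R -> R) (x : R) (k a : R) : is_derive f x a -> is_derive (fun t => k * f t) x (k * a).
Proof. apply is_derive_scal. Qed.
Lemma D_exp (f : R -> R) (x : R) (a : R) : is_derive f x a -> is_derive (fun t => exp (f t)) x (a * exp (f x)).
Proof. intros H. apply (is_derive_comp exp f x (exp (f x)) a). apply is_derive_exp. auto. Qed.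
Lemma D_ln (f : R -> R) (x : R) (a : R) : is_derive f x a -> 0 < f x -> is_derive (fun t => ln (f t)) x (a / f x).
Proof. intros H Hp. apply (is_derive_comp ln f x (/ f x) a); auto. apply is_derive_ln; auto. Qed.
Lemma D_ext (f g : R -> R) (x : R) (a : R) : (forall t, f t = g t) -> is_derive f x a -> is_derive g x a.
Proof. intros E H. apply (is_derive_ext f g); auto. Qed.
Lemma D_eq (f : R -> R) (x : R) (a b : R) : a = b -> is_derive f x a -> is_derive f x b.
Proof. intros ->; auto. Qed.
Lemma D_cont (f : R -> R) (x : R) (a : R) : is_derive f x a -> continuous f x.
Proof. intros H. eapply Dc; eauto. Qed.
Lemma C_plus (f g : R -> R) (x : R) : continuous f x -> continuous g x -> continuous (fun t => f t + g t) x.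
Proof. intros. apply (continuous_plus f g x); auto. Qed.
Lemma C_mult (f g : R -> R) (x : R) : continuous f x -> continuous g x -> continuous (fun t => f t * g t) x.
Proof. intros. apply (continuous_mult f g x); auto. Qed.
Lemma C_const (c x : R) : continuous (fun _ : R => c) x.
Proof. apply continuous_const. Qed.
Lemma C_ext (f g : R -> R) (x : R) : (forall t, f t = g t) -> continuous f x -> continuous g x.
Proof. intros E H. apply (continuous_ext f g); auto. Qed.

Lemma C_opp (f : R -> R) (x : R) : continuous f x -> continuous (fun t => - f t) x.
Proof. intros H. apply C_ext with (fun t => (-1) * f t). intros; ring. apply C_mult; auto. apply C_const. Qed.
Lemma C_minus (f g : R -> R) (x : R) : continuous f x -> continuous g x -> continuous (fun t => f t - g t) x.
Proof. intros. apply C_plus; auto. apply C_opp; auto. Qed.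
Lemma C_comp (f g : R -> R) (x : R) : continuous f x -> continuous g (f x) -> continuous (fun t => g (f t)) x.
Proof. intros. apply (continuous_comp f g x); auto. Qed.
Lemma C_inv (f : R -> R) (x : R) : continuous f x -> f x <> 0 -> continuous (fun t => / f t) x.
Proof. intros H Hn. apply C_comp; auto. apply D_cont with (- / f x ^ 2).
  apply (D_eq (fun t => / t) (f x) (-(1) / (f x)^2)).
  { field; auto. } apply (is_derive_inv (fun t => t)). apply D_id. auto. Qed.
Lemma C_div (f g : R -> R) (x : R) : continuous f x -> continuous g x -> g x <> 0 -> continuous (fun t => f t / g t) x.
Proof. intros. apply C_mult; auto. apply C_inv; auto. Qed.
Lemma C_exp (f : R -> R) (x : R) : continuous f x -> continuous (fun t => exp (f t)) x.
Proof. intros. apply C_comp; auto. apply D_cont with (exp (f x)). apply is_derive_exp. Qed.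
Lemma C_id (x : R) : continuous (fun t : R => t) x.
Proof. apply continuous_id. Qed.
Lemma C_pt (f : R -> R) (x : R) : continuous f x -> continuity_pt f x.
Proof. intros H. apply continuity_pt_filterlim. exact H. Qed.
Ltac Req := match goal with |- ?a = ?b => change (@eq R a b) end.


Record H1D (lam : R) (w dw ddw q : R -> R) : Prop := {
  h_lam : 0 < lam;
  h_w : forall t, 0 <= t -> is_derive w t (dw t);
  h_dw : forall t, 0 <= t -> is_derive dw t (ddw t);
  h_ode : forall t, 0 <= t -> lam * ddw t + dw t + q t * w t = 0;
  h_q : forall t, 0 <= t -> continuous q t;
  h_w0 : w 0 <> 0 }.

Lemma alg1 lam a b q Qm : 0 < lam -> Rabs q <= Qm ->
  0 <= 2*a*b + 2*b*(-(b + q*a)/lam) + (1 + 2/lam + Qm/lam)*(a^2+b^2).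
Proof.
  intros Hl Hq.
  assert (E : 2*a*b + 2*b*(-(b + q*a)/lam) + (1 + 2/lam + Qm/lam)*(a^2+b^2)
     = (a+b)^2 + (2*a^2 + (Qm*(a^2+b^2) - 2*q*a*b)) / lam) by (field; lra).
  rewrite E. assert (0 <= Qm*(a^2+b^2) - 2*q*a*b).
  { destruct (Rle_or_lt 0 q).
    - rewrite Rabs_right in Hq by lra.
      replace (Qm*(a^2+b^2) - 2*q*a*b) with ((Qm - q)*(a^2+b^2) + q*(a-b)^2) by ring.
      apply Rplus_le_le_0_compat; apply Rmult_le_pos; try lra;
        try (apply Rplus_le_le_0_compat); apply pow2_ge_0.
    - rewrite Rabs_left in Hq by lra.
      replace (Qm*(a^2+b^2) - 2*q*a*b) with ((Qm + q)*(a^2+b^2) + (-q)*(a+b)^2) by ring.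
      apply Rplus_le_le_0_compat; apply Rmult_le_pos; try lra;
        try (apply Rplus_le_le_0_compat); apply pow2_ge_0. }
  apply Rplus_le_le_0_compat. apply pow2_ge_0. apply Rdiv_le_0_compat; try lra.
  assert (0 <= a^2) by apply pow2_ge_0. lra.
Qed.

Lemma ode_ddw lam w dw ddw q : H1D lam w dw ddw q -> forall t, 0 <= t ->
  ddw t = -(dw t + q t * w t) / lam.
Proof.
  intros H t Ht. assert (Hl := h_lam _ _ _ _ _ H). assert (E := h_ode _ _ _ _ _ H t Ht).
  replace (ddw t) with ((lam * ddw t) / lam) by (field; lra).
  replace (lam * ddw t) with (-(dw t + q t * w t)) by lra. reflexivity.
Qed.

Lemma no_double_zero lam w dw ddw q : H1D lam w dw ddw q ->
  forall p, 0 <= p -> w p = 0 -> dw p <> 0.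
Proof.
  intros H p Hp Hw Hd.
  destruct (Rle_lt_or_eq_dec 0 p Hp) as [Hp'|Hp']; [|subst; apply (h_w0 _ _ _ _ _ H); auto].
  destruct (continuity_ab_maj (fun t => Rabs (q t)) 0 p Hp) as [Mx [HM HMx]].
  { intros c Hc. apply C_pt. apply C_comp. apply (h_q _ _ _ _ _ H); lra.
    apply continuous_Rabs. }
  set (Qm := Rabs (q Mx)). set (K := 1 + 2/lam + Qm/lam).
  set (U := fun t => (w t ^ 2 + dw t ^ 2) * exp (K * t)).
  assert (HD : forall t, 0 <= t -> is_derive U t
     ((2 * w t * dw t + 2 * dw t * ddw t) * exp (K * t) + (w t ^ 2 + dw t ^ 2) * (K * exp (K * t)))).
  { intros t Ht. unfold U.
    eapply D_eq.
    2: { apply D_mult. apply D_plus; apply is_derive_pow. apply (h_w _ _ _ _ _ H); auto.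
         apply (h_dw _ _ _ _ _ H); auto. apply D_exp, D_scal, D_id. }
    simpl; ring. }
  destruct (MVT_gen U 0 p (fun t => (2 * w t * dw t + 2 * dw t * ddw t) * exp (K * t) +
       (w t ^ 2 + dw t ^ 2) * (K * exp (K * t)))) as [c [Hc Hm]].
  { intros t Ht. rewrite Rmin_left in Ht by lra. apply HD; lra. }
  { intros t Ht. rewrite Rmin_left in Ht by lra. apply C_pt. eapply D_cont. apply HD; lra. }
  rewrite Rmin_left in Hc by lra; rewrite Rmax_right in Hc by lra.
  assert (HU0 : 0 < U 0).
  { unfold U. rewrite Rmult_0_r, exp_0, Rmult_1_r. assert (w 0 <> 0) by (apply (h_w0 _ _ _ _ _ H)).
    assert (0 < w 0 ^ 2) by (apply pow_lt_0_compat_2; auto) || nra. nra. }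
  assert (HUp : U p = 0). { unfold U. rewrite Hw, Hd. ring. }
  assert (Hddw : ddw c = -(dw c + q c * w c) / lam).
  { apply (ode_ddw _ _ _ _ _ H); lra. }
  assert (Hpos : 0 <= (2 * w c * dw c + 2 * dw c * ddw c) * exp (K * c) +
       (w c ^ 2 + dw c ^ 2) * (K * exp (K * c))).
  { rewrite Hddw. assert (He := exp_pos (K * c)).
    assert (A := alg1 lam (w c) (dw c) (q c) Qm (h_lam _ _ _ _ _ H) (HM c Hc)).
    fold K in A. replace ((2 * w c * dw c + 2 * dw c * (-(dw c + q c * w c) / lam)) * exp (K * c) +
       (w c ^ 2 + dw c ^ 2) * (K * exp (K * c))) with
       ((2 * w c * dw c + 2 * dw c * (-(dw c + q c * w c) / lam) + K * (w c ^ 2 + dw c ^ 2)) * exp (K * c)) by ring.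
    apply Rmult_le_pos; lra. }
  simpl in Hm. nra.
Qed.


Lemma MVT_R (f df : R -> R) a b : a <= b -> (forall t, a <= t <= b -> is_derive f t (df t)) ->
  exists c, a <= c <= b /\ f b - f a = df c * (b - a).
Proof.
  intros Hab H. destruct (MVT_gen f a b df) as [c [Hc E]].
  { intros t Ht. rewrite Rmin_left in Ht by lra; rewrite Rmax_right in Ht by lra. apply H; lra. }
  { intros t Ht. rewrite Rmin_left in Ht by lra; rewrite Rmax_right in Ht by lra. apply C_pt.
    eapply D_cont. apply H; lra. }
  rewrite Rmin_left in Hc by lra; rewrite Rmax_right in Hc by lra. exists c; auto.
Qed.

Lemma zero_sep lam w dw ddw q T0 : H1D lam w dw ddw q -> 0 < T0 ->
  exists d0, 0 < d0 /\ forall z1 z2, 0 <= z1 -> z1 < z2 -> z2 <= T0 -> w z1 = 0 -> w z2 = 0 -> d0 <= z2 - z1.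
Proof.
  intros H HT.
  destruct (continuity_ab_min (fun t => w t ^ 2 + dw t ^ 2) 0 T0) as [mn [Hmn Hmn']]. lra.
  { intros c Hc. apply C_pt. apply C_plus; apply C_mult; try apply C_mult; try apply C_const;
    try (eapply D_cont; apply (h_w _ _ _ _ _ H); lra); try (eapply D_cont; apply (h_dw _ _ _ _ _ H); lra). }
  set (m0 := w mn ^ 2 + dw mn ^ 2).
  assert (Hm0 : 0 < m0).
  { unfold m0. destruct (Req_dec (w mn) 0) as [E|E].
    - assert (dw mn <> 0) by (apply (no_double_zero _ _ _ _ _ H); lra).
      rewrite E. simpl. assert (0 < dw mn * dw mn) by (apply Rsqr_pos_lt; auto). nra.
    - assert (0 < w mn * w mn) by (apply Rsqr_pos_lt; auto). assert (0 <= dw mn * dw mn) by nra. simpl. nra. }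
  destruct (continuity_ab_maj (fun t => Rabs (-(dw t + q t * w t) / lam)) 0 T0) as [Mx [HM HMx]]. lra.
  { intros c Hc. apply C_pt. apply C_comp. apply C_div. apply C_opp. apply C_plus.
    eapply D_cont; apply (h_dw _ _ _ _ _ H); lra. apply C_mult. apply (h_q _ _ _ _ _ H); lra.
    eapply D_cont; apply (h_w _ _ _ _ _ H); lra. apply C_const. assert (0 < lam) by apply (h_lam _ _ _ _ _ H). lra.
    apply continuous_Rabs. }
  set (B := Rabs (-(dw Mx + q Mx * w Mx) / lam) + 1).
  assert (HB : 0 < B) by (unfold B; assert (0 <= Rabs (-(dw Mx + q Mx * w Mx) / lam)) by apply Rabs_pos; lra).
  assert (HBd : forall t, 0 <= t <= T0 -> Rabs (ddw t) <= B).
  { intros t Ht. rewrite (ode_ddw _ _ _ _ _ H t) by lra. specialize (HM t Ht). simpl in HM. unfold B; lra. }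
  exists (Rmin 1 (m0 / (B ^ 2 + 1))). split.
  { apply Rmin_pos. lra. apply Rdiv_lt_0_compat; auto. assert (0 <= B^2) by apply pow2_ge_0. lra. }
  intros z1 z2 H1 H12 H2 Hw1 Hw2.
  destruct (MVT_R w dw z1 z2) as [xi [Hxi Exi]]. lra.
  { intros t Ht; apply (h_w _ _ _ _ _ H); lra. }
  rewrite Hw1, Hw2 in Exi.
  assert (Hdxi : dw xi = 0).
  { assert (dw xi * (z2 - z1) = 0) by lra. apply Rmult_integral in H0. destruct H0; auto. lra. }
  destruct (MVT_R dw ddw z1 xi) as [c [Hc Ec]]. lra.
  { intros t Ht; apply (h_dw _ _ _ _ _ H); lra. }
  assert (Hd1 : Rabs (dw z1) <= B * (z2 - z1)).
  { assert (dw z1 = - (ddw c * (xi - z1))) by lra. rewrite H0, Rabs_Ropp, Rabs_mult.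
    rewrite (Rabs_right (xi - z1)) by lra. assert (Rabs (ddw c) <= B) by (apply HBd; lra).
    apply Rle_trans with (B * (xi - z1)). apply Rmult_le_compat_r; lra. apply Rmult_le_compat_l; lra. }
  assert (Hm1 : m0 <= dw z1 ^ 2).
  { assert (A := Hmn z1 (conj H1 (Rlt_le _ _ (Rlt_le_trans _ _ _ H12 H2)))). cbv beta in A.
    rewrite Hw1 in A. unfold m0. simpl in A |- *. lra. }
  assert (Hsq : dw z1 ^ 2 <= B ^ 2 * (z2 - z1) ^ 2).
  { rewrite <- pow2_abs. replace (B^2 * (z2-z1)^2) with ((B*(z2-z1))^2) by ring.
    apply pow_incr. split; [apply Rabs_pos|exact Hd1]. }
  destruct (Rle_or_lt (Rmin 1 (m0 / (B ^ 2 + 1))) (z2 - z1)) as [OK|Bad]; auto. exfalso.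
  assert (Hr1 : Rmin 1 (m0 / (B ^ 2 + 1)) <= 1) by apply Rmin_l.
  assert (Hr2 : Rmin 1 (m0 / (B ^ 2 + 1)) <= m0 / (B ^ 2 + 1)) by apply Rmin_r.
  set (e := z2 - z1) in *.
  assert (He : 0 < e) by (unfold e; lra).
  assert (Hb2 : 0 <= B ^ 2) by apply pow2_ge_0.
  assert (He2 : e * (B ^ 2 + 1) < m0).
  { apply Rlt_le_trans with (m0 / (B ^ 2 + 1) * (B ^ 2 + 1)).
    apply Rmult_lt_compat_r; lra. right; field; lra. }
  assert (B ^ 2 * e ^ 2 < m0). { simpl. nra. }
  lra.
Qed.


Lemma zeros_list lam w dw ddw q T0 : H1D lam w dw ddw q -> 0 < T0 -> (forall t, T0 <= t -> w t <> 0) ->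
  exists Z, Sorted Rlt Z /\ (forall t, 0 <= t -> (w t = 0 <-> In t Z)) /\ (forall z, In z Z -> 0 < z < T0).
Proof.
  intros H HT HT0.
  destruct (zero_sep _ _ _ _ _ T0 H HT) as [d0 [Hd0 Hsep]].
  set (dd := d0 / 2).
  assert (Hdd : 0 < dd) by (unfold dd; lra).
  assert (Claim : forall N : nat, exists l, Sorted Rlt l /\
     forall s, In s l <-> (0 <= s /\ w s = 0 /\ T0 - INR N * dd <= s)).
  { induction N as [|N IH].
    - exists nil. split. constructor. intros s. simpl. split; [tauto|].
      intros [A [B C]]. apply (HT0 s); auto. lra.
    - destruct IH as [l [Hl Hm]]. rewrite S_INR.
      destruct (Classical_Prop.classic (exists z, 0 <= z /\ w z = 0 /\
          T0 - (INR N + 1) * dd <= z < T0 - INR N * dd)) as [[z [Z1 [Z2 Z3]]]|NE].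
      + exists (z :: l). split.
        * constructor; auto. destruct l as [|s l']; constructor.
          assert (In s (s :: l')) by (left; auto). apply Hm in H0. lra.
        * intros s. split.
          { intros [<-|Hs]. split; auto. split; auto. lra.
            apply Hm in Hs. destruct Hs as [A [B C]]. split; auto. split; auto.
            assert (0 <= INR N) by apply pos_INR. nra. }
          { intros [A [B C]]. destruct (Rle_or_lt (T0 - INR N * dd) s) as [D|D].
            right; apply Hm; auto. left.
            destruct (Rtotal_order s z) as [E|[E|E]]; auto; exfalso.
            - assert (d0 <= z - s). apply Hsep; auto. assert (0 <= INR N) by apply pos_INR. nra.
              unfold dd in *; lra.
            - assert (d0 <= s - z). apply Hsep; auto. assert (0 <= INR N) by apply pos_INR. nra.
              unfold dd in *; lra. }
      + exists l. split; auto. intros s. rewrite Hm. split.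
        * intros [A [B C]]. split; auto. split; auto. assert (0 <= INR N) by apply pos_INR. nra.
        * intros [A [B C]]. split; auto. split; auto. destruct (Rle_or_lt (T0 - INR N * dd) s); auto.
          exfalso. apply NE. exists s. repeat split; auto; lra. }
  destruct (INR_archimed dd T0 Hdd) as [N HN].
  destruct (Claim N) as [l [Hl Hm]]. exists l. split; auto. split.
  - intros t Ht. rewrite Hm. split. intros E; split; auto; split; auto; lra. tauto.
  - intros z Hz. apply Hm in Hz. destruct Hz as [A [B C]]. split.
    destruct (Rle_lt_or_eq_dec 0 z A); auto. subst. exfalso. apply (h_w0 _ _ _ _ _ H); auto.
    destruct (Rlt_or_le z T0); auto. exfalso. apply (HT0 z); auto.
Qed.


Lemma cont_eps (f : R -> R) x : continuous f x -> forall eps, 0 < eps ->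
  exists eta, 0 < eta /\ forall y, Rabs (y - x) < eta -> Rabs (f y - f x) < eps.
Proof.
  intros H eps He. apply C_pt in H. destruct (H eps He) as [al [Hal Hx]].
  exists al. split; auto. intros y Hy. destruct (Req_dec y x) as [->|Hn].
  rewrite Rminus_eq_0, Rabs_R0; auto.
  apply (Hx y). split. split. unfold no_cond; auto. auto. exact Hy.
Qed.

Lemma sgn_pos r : 0 < r -> sgn r = 1.
Proof. intros H; unfold sgn; destruct (Rlt_dec 0 r); [auto|lra]. Qed.
Lemma sgn_neg r : r < 0 -> sgn r = -1.
Proof. intros H; unfold sgn; destruct (Rlt_dec 0 r); [lra|]. destruct (Rlt_dec r 0); [auto|lra]. Qed.
Lemma sgn_mult r s : sgn (r * s) = sgn r * sgn s.
Proof.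
  destruct (Rtotal_order r 0) as [A|[A|A]]; destruct (Rtotal_order s 0) as [B|[B|B]];
  try (subst; rewrite ?Rmult_0_l, ?Rmult_0_r; unfold sgn;
       repeat destruct Rlt_dec; lra).
  all: try (rewrite (sgn_pos (r * s)) by nra); try (rewrite (sgn_neg (r * s)) by nra);
    try (rewrite (sgn_pos r) by lra); try (rewrite (sgn_neg r) by lra);
    try (rewrite (sgn_pos s) by lra); try (rewrite (sgn_neg s) by lra); ring.
Qed.
Lemma sgn_sq r : r <> 0 -> sgn r * sgn r = 1.
Proof. intros H. destruct (Rtotal_order r 0) as [A|[A|A]]. rewrite sgn_neg; auto; ring. lra. rewrite sgn_pos; auto; ring. Qed.

Lemma zero_local lam w dw ddw q p : H1D lam w dw ddw q -> 0 < p -> w p = 0 ->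
  exists rho, 0 < rho /\ rho < p /\ exists sL, (sL = 1 \/ sL = -1) /\
   (forall s, p - rho <= s < p -> w s <> 0 /\ sgn (w s) = sL) /\
   (forall s, p < s <= p + rho -> w s <> 0 /\ sgn (w s) = - sL).
Proof.
  intros H Hp Hw.
  assert (Ha : dw p <> 0) by (apply (no_double_zero _ _ _ _ _ H); lra).
  assert (Hc : continuous dw p) by (eapply D_cont; apply (h_dw _ _ _ _ _ H); lra).
  destruct (cont_eps dw p Hc (Rabs (dw p)) (Rabs_pos_lt _ Ha)) as [eta [Heta He]].
  set (rho := Rmin (eta / 2) (p / 2)).
  assert (Hr : 0 < rho /\ rho <= eta / 2 /\ rho <= p / 2).
  { unfold rho; split; [apply Rmin_pos; lra|split; [apply Rmin_l|apply Rmin_r]]. }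
  exists rho. split; [lra|split; [lra|]].
  assert (Hsg : forall s, p - rho <= s <= p + rho -> s <> p -> w s = dw s * 0 + 0 \/ True) by auto.
  assert (Hrep : forall s, p - rho <= s <= p + rho -> exists c, Rabs (c - p) < eta /\ w s = dw c * (s - p)).
  { intros s Hs. destruct (Rle_or_lt p s) as [A|A].
    - destruct (MVT_R w dw p s A) as [c [Hc1 Ec]].
      { intros t Ht; apply (h_w _ _ _ _ _ H); lra. }
      exists c. split. apply Rabs_lt_between; lra. lra.
    - destruct (MVT_R w dw s p) as [c [Hc1 Ec]]. lra.
      { intros t Ht; apply (h_w _ _ _ _ _ H); lra. }
      exists c. split. apply Rabs_lt_between; lra. nra. }
  destruct (Rlt_or_le 0 (dw p)) as [Pos|Neg].
  - exists (-1). split; [right; auto|]. rewrite Rabs_right in He by lra.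
    split; intros s Hs; destruct (Hrep s ltac:(lra)) as [c [Hc1 Ec]];
      specialize (He c Hc1); apply Rabs_lt_between in He.
    + assert (w s < 0) by (rewrite Ec; nra). split; [lra|apply sgn_neg; auto].
    + assert (0 < w s) by (rewrite Ec; nra). split; [lra|rewrite sgn_pos; auto; ring].
  - assert (Neg' : dw p < 0) by lra.
    exists 1. split; [left; auto|]. rewrite Rabs_left in He by lra.
    split; intros s Hs; destruct (Hrep s ltac:(lra)) as [c [Hc1 Ec]];
      specialize (He c Hc1); apply Rabs_lt_between in He.
    + assert (0 < w s) by (rewrite Ec; nra). split; [lra|apply sgn_pos; auto].
    + assert (w s < 0) by (rewrite Ec; nra). split; [lra|apply sgn_neg; auto].
Qed.


Lemma HL_xlnx : HL (fun d => d * ln d) 0.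
Proof.
  assert (H0 : filterlim (fun y => ln y * exp (ln y)) (at_right 0) (locally 0)).
  { assert (H1 := is_lim_mul_exp_m). unfold is_lim in H1. simpl in H1.
    apply (filterlim_comp _ _ _ ln (fun y => y * exp y) _ _ _ is_lim_ln_0 H1). }
  apply (HL_ext (fun y => ln y * exp (ln y))); auto.
  exists 1. split; [lra|]. intros d Hd. rewrite exp_ln by lra. ring.
Qed.

Lemma DQp (f : R -> R) x l : is_derive f x l -> HL (fun d => (f (x + d) - f x) / d) l.
Proof.
  intros H. apply is_derive_Reals in H. apply HL_iff. intros eps He.
  destruct (H eps He) as [[e He'] Hd]. exists e. split; auto. intros d Hd'.
  apply Hd. lra. simpl. rewrite Rabs_right; lra.
Qed.

Lemma DQm (f : R -> R) x l : is_derive f x l -> HL (fun d => (f (x - d) - f x) / d) (- l).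
Proof.
  intros H. apply is_derive_Reals in H. apply HL_iff. intros eps He.
  destruct (H eps He) as [[e He'] Hd]. exists e. split; auto. intros d Hd'.
  specialize (Hd (- d) ltac:(lra)). simpl in Hd. rewrite Rabs_Ropp, Rabs_right in Hd by lra.
  specialize (Hd ltac:(lra)). replace (x + - d) with (x - d) in Hd by ring.
  replace ((f (x - d) - f x) / d - - l) with (- ((f (x - d) - f x) / - d - l)) by (field; lra).
  rewrite Rabs_Ropp; auto.
Qed.

Lemma L2 (phi psi : R -> R) r c : 0 < r ->
  (forall d, 0 <= d < r -> continuous phi d) ->
  (forall d, 0 < d < r -> is_derive phi d (d * psi d)) ->
  phi 0 = 0 -> HL psi c -> HL (fun d => phi d / d ^ 2) (c / 2).
Proof.
  intros Hr Hc Hd H0 Hpsi. rewrite HL_iff in Hpsi |- *. intros eps He.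
  destruct (Hpsi (eps / 2) ltac:(lra)) as [e [He' Hp]].
  exists (Rmin e r). split. apply Rmin_pos; lra. intros d Hd'.
  assert (D1 : d < e) by (eapply Rlt_le_trans; [apply Hd'|apply Rmin_l]).
  assert (D2 : d < r) by (eapply Rlt_le_trans; [apply Hd'|apply Rmin_r]).
  destruct (MVT_gen (fun s => phi s - c / 2 * s ^ 2) 0 d (fun s => s * (psi s - c))) as [xi [Hxi E]].
  { intros s Hs. rewrite Rmin_left in Hs by lra; rewrite Rmax_right in Hs by lra.
    eapply D_eq. 2: { apply D_minus. apply Hd; lra. apply D_scal. apply is_derive_pow. apply D_id. }
    simpl; field. }
  { intros s Hs. rewrite Rmin_left in Hs by lra; rewrite Rmax_right in Hs by lra. apply C_pt.
    apply C_minus. apply Hc; lra. apply C_mult. apply C_const. apply C_mult. apply C_id.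
    apply C_mult. apply C_id. apply C_const. }
  rewrite Rmin_left in Hxi by lra; rewrite Rmax_right in Hxi by lra.
  rewrite H0 in E.
  assert (B : Rabs (xi * (psi xi - c)) <= d * (eps / 2)).
  { destruct (Req_dec xi 0) as [->|Hx]. rewrite Rmult_0_l, Rabs_R0. apply Rmult_le_pos; lra.
    rewrite Rabs_mult, Rabs_right by lra. apply Rmult_le_compat; try lra. apply Rabs_pos.
    left. apply Hp. lra. }
  assert (Hd2 : 0 < d ^ 2) by (apply pow_lt; lra).
  replace (phi d / d ^ 2 - c / 2) with ((phi d - c / 2 * d ^ 2 - (0 - c / 2 * 0 ^ 2)) / d ^ 2) by (field; lra).
  rewrite E. rewrite Rminus_0_r. unfold Rdiv. rewrite Rabs_mult, Rabs_mult.
  rewrite (Rabs_right d) by lra. rewrite (Rabs_right (/ d ^ 2)) by (apply Rle_ge, Rlt_le, Rinv_0_lt_compat; auto).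
  apply Rle_lt_trans with (d * (eps / 2) * d * / d ^ 2).
  apply Rmult_le_compat_r. apply Rlt_le, Rinv_0_lt_compat; auto. apply Rmult_le_compat_r; lra.
  replace (d * (eps / 2) * d * / d ^ 2) with (eps / 2) by (field; lra). lra.
Qed.


Lemma locally_pos (P : R -> Prop) t : 0 < t -> (forall y, 0 < y -> P y) -> locally t P.
Proof.
  intros Ht H. exists (mkposreal t Ht). intros y Hy. apply H.
  unfold ball in Hy; simpl in Hy; unfold AbsRing_ball, abs, minus, plus, opp in Hy; simpl in Hy.
  apply Rabs_lt_between in Hy. lra.
Qed.

Lemma ddw_cont lam w dw ddw q t : H1D lam w dw ddw q -> 0 < t -> continuous ddw t.
Proof.
  intros H Ht. apply (continuous_ext_loc _ (fun y => -(dw y + q y * w y) / lam)).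
  apply locally_pos; auto. intros y Hy. symmetry; apply (ode_ddw _ _ _ _ _ H); lra.
  apply C_div. apply C_opp. apply C_plus. eapply D_cont; apply (h_dw _ _ _ _ _ H); lra.
  apply C_mult. apply (h_q _ _ _ _ _ H); lra. eapply D_cont; apply (h_w _ _ _ _ _ H); lra.
  apply C_const. assert (0 < lam) by apply (h_lam _ _ _ _ _ H). lra.
Qed.

Lemma D_shift (f : R -> R) x0 d l : is_derive f (x0 + d) l -> is_derive (fun s => f (x0 + s)) d l.
Proof.
  intros H. eapply D_eq. 2: { apply (is_derive_comp f (fun s => x0 + s) d l 1); auto.
    eapply D_eq. 2: { apply D_plus. apply D_const. apply D_id. } Req; ring. }
  simpl. Req. unfold scal; simpl; unfold mult; simpl. ring.
Qed.

Lemma D_shiftm (f : R -> R) x0 d l : is_derive f (x0 - d) l -> is_derive (fun s => f (x0 - s)) d (- l).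
Proof.
  intros H. eapply D_eq. 2: { apply (is_derive_comp f (fun s => x0 - s) d l (-1)); auto.
    eapply D_eq. 2: { apply D_minus. apply D_const. apply D_id. } Req; ring. }
  simpl. Req. unfold scal; simpl; unfold mult; simpl. ring.
Qed.

Lemma HL_ln f a : HL f a -> 0 < a -> HL (fun d => ln (f d)) (ln a).
Proof. intros H Ha. apply (HL_comp f ln a H). eapply Dc. apply is_derive_ln; auto. Qed.

Lemma Z3 lam w dw ddw q p : H1D lam w dw ddw q -> 0 < p -> w p = 0 ->
  exists L, HL (fun d => dw (p - d) / w (p - d) + dw (p + d) / w (p + d)) L.
Proof.
  intros H Hp Hw.
  destruct (zero_local _ _ _ _ _ p H Hp Hw) as [rho [Hr1 [Hr2 [sL [HsL [HL1 HR1]]]]]].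
  assert (Ha : dw p <> 0) by (apply (no_double_zero _ _ _ _ _ H); lra).
  assert (Hwd : forall t, 0 <= t -> is_derive w t (dw t)) by apply (h_w _ _ _ _ _ H).
  assert (Hdd : forall t, 0 <= t -> is_derive dw t (ddw t)) by apply (h_dw _ _ _ _ _ H).
  assert (Ap : HL (fun d => ((d * dw (p + d) - w (p + d)) / d ^ 2) * / ((w (p + d) - w p) / d))
                  ((ddw p / 2) * / dw p)).
  { apply HL_mult. apply (L2 (fun d => d * dw (p + d) - w (p + d)) (fun d => ddw (p + d)) p).
    - lra.
    - intros d Hd. apply C_minus. apply C_mult. apply C_id.
      eapply D_cont, D_shift, Hdd; lra. eapply D_cont, D_shift, Hwd; lra.
    - intros d Hd. eapply D_eq. 2: { apply D_minus. apply D_mult. apply D_id. apply D_shift, Hdd; lra.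
        apply D_shift, Hwd; lra. } cbv beta; ring.
    - rewrite Rplus_0_r, Hw. ring.
    - apply (HL_shift ddw p). apply (ddw_cont _ _ _ _ _ _ H); lra.
    - apply HL_inv; auto. apply DQp. apply Hwd; lra. }
  assert (Am : HL (fun d => ((d * dw (p - d) + w (p - d)) / d ^ 2) * / ((w (p - d) - w p) / d))
                  ((- ddw p / 2) * / (- dw p))).
  { apply HL_mult. apply (L2 (fun d => d * dw (p - d) + w (p - d)) (fun d => - ddw (p - d)) p).
    - lra.
    - intros d Hd. apply C_plus. apply C_mult. apply C_id.
      eapply D_cont, D_shiftm, Hdd; lra. eapply D_cont, D_shiftm, Hwd; lra.
    - intros d Hd. eapply D_eq. 2: { apply D_plus. apply D_mult. apply D_id. apply D_shiftm, Hdd; lra.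
        apply D_shiftm, Hwd; lra. } cbv beta; ring.
    - rewrite Rminus_0_r, Hw. ring.
    - apply HL_opp. apply (HL_shiftm ddw p). apply (ddw_cont _ _ _ _ _ _ H); lra.
    - apply HL_inv. apply DQm. apply Hwd; lra. lra. }
  eexists. apply (HL_ext (fun d => ((d * dw (p - d) + w (p - d)) / d ^ 2) * / ((w (p - d) - w p) / d)
     + ((d * dw (p + d) - w (p + d)) / d ^ 2) * / ((w (p + d) - w p) / d))).
  2: apply HL_plus; [exact Am|exact Ap].
  exists rho. split; auto. intros d Hd. rewrite Hw.
  destruct (HL1 (p - d) ltac:(lra)) as [N1 _]. destruct (HR1 (p + d) ltac:(lra)) as [N2 _].
  field. repeat split; auto; lra.
Qed.

Lemma Z4 lam w dw ddw q p : H1D lam w dw ddw q -> 0 < p -> w p = 0 ->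
  exists L, HL (fun d => exp (d / lam) * ln (w (p - d) ^ 2) - exp (- d / lam) * ln (w (p + d) ^ 2)) L.
Proof.
  intros H Hp Hw.
  destruct (zero_local _ _ _ _ _ p H Hp Hw) as [rho [Hr1 [Hr2 [sL [HsL [HL1 HR1]]]]]].
  assert (Ha : dw p <> 0) by (apply (no_double_zero _ _ _ _ _ H); lra).
  assert (Hl : 0 < lam) by apply (h_lam _ _ _ _ _ H).
  assert (Hwd : forall t, 0 <= t -> is_derive w t (dw t)) by apply (h_w _ _ _ _ _ H).
  set (qp := fun d => (w (p + d) - w p) / d). set (qm := fun d => (w (p - d) - w p) / d).
  assert (Qp : HL (fun d => ln (qp d * qp d)) (ln (dw p * dw p))).
  { apply HL_ln. apply HL_mult; apply DQp, Hwd; lra. apply Rsqr_pos_lt; auto. }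
  assert (Qm : HL (fun d => ln (qm d * qm d)) (ln (- dw p * - dw p))).
  { apply HL_ln. apply HL_mult; apply DQm, Hwd; lra. apply Rsqr_pos_lt; lra. }
  assert (E1 : HL (fun d => exp (/ lam * d) - 1) 0).
  { replace 0 with (1 - 1) by ring. apply HL_minus. apply HL_exp_c. apply HL_const. }
  assert (E2 : HL (fun d => exp (- / lam * d) - 1) 0).
  { replace 0 with (1 - 1) by ring. apply HL_minus. apply HL_exp_c. apply HL_const. }
  assert (E3 : HL (fun d => ((exp (/ lam * (0 + d)) - exp (- / lam * (0 + d))) -
                              (exp (/ lam * 0) - exp (- / lam * 0))) / d) (/ lam * exp (/ lam * 0) - (- / lam * exp (- / lam * 0)))).
  { apply (DQp (fun s => exp (/ lam * s) - exp (- / lam * s))).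
    apply D_minus. eapply D_eq. 2: apply D_exp, D_scal, D_id. ring.
    eapply D_eq. 2: apply D_exp, D_scal, D_id. ring. }
  eexists. apply (HL_ext (fun d => (ln (qm d * qm d) - ln (qp d * qp d)) + (exp (/ lam * d) - 1) * ln (qm d * qm d)
     - (exp (- / lam * d) - 1) * ln (qp d * qp d)
     + 2 * ((((exp (/ lam * (0 + d)) - exp (- / lam * (0 + d))) -
                              (exp (/ lam * 0) - exp (- / lam * 0))) / d) * (d * ln d)))).
  2: { apply HL_plus. apply HL_minus. apply HL_plus. apply HL_minus; eauto.
       apply HL_mult; eauto. apply HL_mult; eauto. apply HL_mult. apply HL_const. apply HL_mult; eauto.
       apply HL_xlnx. }
  exists rho. split; auto. intros d Hd.
  destruct (HL1 (p - d) ltac:(lra)) as [N1 _]. destruct (HR1 (p + d) ltac:(lra)) as [N2 _].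
  assert (Sp : w (p + d) ^ 2 = (qp d * qp d) * (d * d)) by (unfold qp; rewrite Hw; field; lra).
  assert (Sm : w (p - d) ^ 2 = (qm d * qm d) * (d * d)) by (unfold qm; rewrite Hw; field; lra).
  assert (Wp : w (p + d) = qp d * d) by (unfold qp; rewrite Hw; field; lra).
  assert (Wm : w (p - d) = qm d * d) by (unfold qm; rewrite Hw; field; lra).
  assert (Pp : 0 < qp d * qp d).
  { apply Rsqr_pos_lt. intros E. rewrite E, Rmult_0_l in Wp. auto. }
  assert (Pm : 0 < qm d * qm d).
  { apply Rsqr_pos_lt. intros E. rewrite E, Rmult_0_l in Wm. auto. }
  rewrite Sp, Sm. rewrite (ln_mult (qp d * qp d) (d * d)), (ln_mult (qm d * qm d) (d * d)) by (try assumption; apply Rmult_lt_0_compat; lra). rewrite (ln_mult d d) by lra.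
  rewrite !Rplus_0_l, !Rmult_0_r, exp_0.
  replace (d / lam) with (/ lam * d) by (unfold Rdiv; ring).
  replace (- d / lam) with (- / lam * d) by (unfold Rdiv; ring).
  field. lra.
Qed.


Lemma D_explam lam s : lam <> 0 -> is_derive (fun t => exp (t / lam)) s (exp (s / lam) / lam).
Proof.
  intros Hl. apply (D_ext (fun t => exp (/ lam * t))). intros; unfold Rdiv; rewrite Rmult_comm; auto.
  eapply D_eq. 2: apply D_exp, D_scal, D_id. replace (/ lam * s) with (s / lam) by (unfold Rdiv; ring).
  unfold Rdiv; ring.
Qed.

Lemma C_explam lam s : continuous (fun t => exp (t / lam)) s.
Proof.
  apply C_exp. apply C_mult. apply C_id. apply C_const.
Qed.

Definition Rf (w dw : R -> R) s := dw s / w s.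
Definition Qf lam (q : R -> R) s := RInt (fun r => q r * exp (r / lam) / lam) 0 s.
Definition Ff (w dw : R -> R) lam s := (Rf w dw s) ^ 2 * exp (s / lam).
Definition Phif lam (w dw q : R -> R) s := - (Rf w dw s * exp (s / lam)) - Qf lam q s.
Definition gf lam (w dw : R -> R) s := sgn (w s) * Ff w dw lam s.

Lemma Q_der lam w dw ddw q s : H1D lam w dw ddw q -> 0 < s ->
  is_derive (Qf lam q) s (q s * exp (s / lam) / lam).
Proof.
  intros H Hs. assert (Hl : 0 < lam) by apply (h_lam _ _ _ _ _ H).
  assert (Hc : forall z, 0 <= z -> continuous (fun r => q r * exp (r / lam) / lam) z).
  { intros z Hz. apply C_div. apply C_mult. apply (h_q _ _ _ _ _ H); auto. apply C_explam. apply C_const. lra. }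
  apply (is_derive_RInt (fun r => q r * exp (r / lam) / lam) (Qf lam q) 0 s).
  apply locally_pos; auto. intros b Hb. unfold Qf. apply cont_RInt.
  intros z Hz. rewrite Rmin_left in Hz by lra; rewrite Rmax_right in Hz by lra. apply Hc; lra.
  apply Hc; lra.
Qed.

Lemma Phi_der lam w dw ddw q s : H1D lam w dw ddw q -> 0 < s -> w s <> 0 ->
  is_derive (Phif lam w dw q) s (Ff w dw lam s).
Proof.
  intros H Hs Hw. assert (Hl : 0 < lam) by apply (h_lam _ _ _ _ _ H).
  unfold Phif, Ff, Rf.
  eapply D_eq. 2: { apply D_minus. apply D_opp. apply D_mult. apply is_derive_div.
    apply (h_dw _ _ _ _ _ H); lra. apply (h_w _ _ _ _ _ H); lra. auto.
    apply D_explam; lra. apply (Q_der _ _ _ _ _ s H Hs). }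
  rewrite (ode_ddw _ _ _ _ _ H s) by lra. field. split; lra.
Qed.

Lemma sgn_cont (w : R -> R) s : continuous w s -> w s <> 0 -> continuous (fun t => sgn (w t)) s.
Proof.
  intros Hc Hn. apply (continuous_ext_loc _ (fun _ => sgn (w s))); [|apply C_const].
  destruct (cont_eps w s Hc (Rabs (w s)) (Rabs_pos_lt _ Hn)) as [eta [Heta He]].
  exists (mkposreal eta Heta). intros y Hy.
  unfold ball in Hy; simpl in Hy; unfold AbsRing_ball, abs, minus, plus, opp in Hy; simpl in Hy.
  specialize (He y Hy). apply Rabs_lt_between in He.
  destruct (Rlt_or_le 0 (w s)) as [P|P].
  - rewrite Rabs_right in He by lra. rewrite !sgn_pos; auto; lra.
  - rewrite Rabs_left in He by lra. rewrite !sgn_neg; auto; lra.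
Qed.

Lemma g_cont lam w dw ddw q s : H1D lam w dw ddw q -> 0 <= s -> w s <> 0 -> continuous (gf lam w dw) s.
Proof.
  intros H Hs Hw. assert (Hwc : continuous w s) by (eapply D_cont; apply (h_w _ _ _ _ _ H); auto).
  unfold gf, Ff, Rf. apply C_mult. apply sgn_cont; auto.
  apply C_mult. apply C_mult. apply C_div; auto. eapply D_cont; apply (h_dw _ _ _ _ _ H); auto.
  apply C_mult. apply C_div; auto. eapply D_cont; apply (h_dw _ _ _ _ _ H); auto. apply C_const.
  apply C_explam.
Qed.

Lemma g_pole lam w dw ddw q p : H1D lam w dw ddw q -> 0 < p -> w p = 0 -> pole_ok lam (gf lam w dw) p.
Proof.
  intros H Hp Hw. assert (Hl : 0 < lam) by apply (h_lam _ _ _ _ _ H).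
  destruct (zero_local _ _ _ _ _ p H Hp Hw) as [rho [Hr1 [Hr2 [sL [HsL [HL1 HR1]]]]]].
  destruct (Z3 _ _ _ _ _ p H Hp Hw) as [L3 HL3].
  exists rho. split; auto. exists (fun s => sL * Phif lam w dw q s), (fun s => - sL * Phif lam w dw q s).
  split; [|split].
  - intros s Hs. destruct (HL1 s Hs) as [N E]. unfold gf. rewrite E. apply D_scal. apply (Phi_der _ _ _ _ _ _ H); lra.
  - intros s Hs. destruct (HR1 s Hs) as [N E]. unfold gf. rewrite E. apply D_scal. apply (Phi_der _ _ _ _ _ _ H); lra.
  - eexists. apply (HL_ext (fun d => sL * (- exp (p / lam) * (dw (p - d) / w (p - d) + dw (p + d) / w (p + d))
        - exp (/ lam * d) * Qf lam q (p - d) - exp (- / lam * d) * Qf lam q (p + d)))).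
    + exists rho. split; auto. intros d Hd. cbv beta. unfold Phif, Rf.
      replace (d / lam) with (/ lam * d) by (unfold Rdiv; ring).
      replace (- d / lam) with (- / lam * d) by (unfold Rdiv; ring).
      assert (E1 : exp ((p - d) / lam) = exp (p / lam) * exp (- / lam * d)) by (rewrite <- exp_plus; f_equal; field; lra).
      assert (E2 : exp ((p + d) / lam) = exp (p / lam) * exp (/ lam * d)) by (rewrite <- exp_plus; f_equal; field; lra).
      assert (E3 : exp (/ lam * d) * exp (- / lam * d) = 1) by (rewrite <- exp_plus, <- exp_0; f_equal; ring).
      rewrite E1, E2. apply Rminus_diag_uniq.
      transitivity (sL * exp (p / lam) * (dw (p - d) / w (p - d) + dw (p + d) / w (p + d)) *
        (exp (/ lam * d) * exp (- / lam * d) - 1)). ring. rewrite E3; ring.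
    + apply HL_mult. apply HL_const. apply HL_minus. apply HL_minus. apply HL_mult. apply HL_const. exact HL3.
      apply HL_mult. apply HL_exp_c. apply HL_shiftm. eapply D_cont, Q_der; eauto.
      apply HL_mult. apply HL_exp_c. apply HL_shift. eapply D_cont, Q_der; eauto.
Qed.


Lemma sub_poles (Z : list R) a b : Sorted Rlt Z ->
  exists P, Sorted Rlt P /\ forall s, In s P <-> (a < s < b /\ In s Z).
Proof.
  intros HS. apply StronglySorted_Rlt in HS.
  exists (filter (fun s => if Rlt_dec a s then if Rlt_dec s b then true else false else false) Z).
  split.
  - apply StronglySorted_Sorted. induction HS as [|h t HS IH HF]; simpl. constructor.
    destruct (Rlt_dec a h); [destruct (Rlt_dec h b)|]; auto. constructor; auto.
    apply Forall_forall. intros x Hx. apply filter_In in Hx. destruct Hx as [Hx _].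
    eapply Forall_forall in HF; eauto.
  - intros s. rewrite filter_In. destruct (Rlt_dec a s); [destruct (Rlt_dec s b)|]; split; intros; try tauto;
    try (destruct H; discriminate); try lra.
Qed.


Lemma inner_exists lam w dw ddw q Z t : H1D lam w dw ddw q -> Sorted Rlt Z ->
  (forall s, 0 <= s -> (w s = 0 <-> In s Z)) -> 0 <= t -> w t <> 0 ->
  exists l, is_mpv lam (gf lam w dw) (fun s => w s = 0) 0 t l.
Proof.
  intros H HS HZ Ht Hwt.
  destruct (sub_poles Z 0 t HS) as [P [HP1 HP2]].
  apply (GM lam (gf lam w dw) (fun s => w s = 0) 0 t P); auto.
  - apply (h_lam _ _ _ _ _ H).
  - apply (h_w0 _ _ _ _ _ H).
  - intros s. rewrite HP2. split; intros [A B]; split; auto. apply HZ; auto; lra. apply HZ; auto; lra.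
  - intros z Hz Hn. apply (g_cont _ _ _ _ _ _ H); lra.
  - intros p Hp. apply HP2 in Hp. destruct Hp as [A B]. apply (g_pole _ _ _ _ _ _ H). lra. apply HZ; auto; lra.
Qed.


Definition gc lam w dw s := gf lam w dw ((s + Rabs s) / 2).
Definition Gf lam (w dw : R -> R) t :=
  if Rle_dec 0 t then epsilon (inhabits 0) (fun l => is_mpv lam (gf lam w dw) (fun s => w s = 0) 0 t l)
  else RInt (gc lam w dw) 0 t.

Lemma G_spec lam w dw ddw q Z t : H1D lam w dw ddw q -> Sorted Rlt Z ->
  (forall s, 0 <= s -> (w s = 0 <-> In s Z)) -> 0 <= t -> w t <> 0 ->
  is_mpv lam (gf lam w dw) (fun s => w s = 0) 0 t (Gf lam w dw t).
Proof.
  intros H HS HZ Ht Hw. unfold Gf. destruct (Rle_dec 0 t); [|lra].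
  apply epsilon_spec. eapply inner_exists; eauto.
Qed.

Lemma G_ext lam w dw ddw q Z t1 t2 : H1D lam w dw ddw q -> Sorted Rlt Z ->
  (forall s, 0 <= s -> (w s = 0 <-> In s Z)) -> 0 <= t1 <= t2 -> (forall s, t1 <= s <= t2 -> w s <> 0) ->
  Gf lam w dw t2 = Gf lam w dw t1 + RInt (gf lam w dw) t1 t2.
Proof.
  intros H HS HZ Ht Hw.
  apply (is_mpv_unique lam (gf lam w dw) (fun s => w s = 0) 0 t2).
  eapply G_spec; eauto. lra. apply Hw; lra.
  apply is_mpv_ext. eapply G_spec; eauto. lra. apply Hw; lra. lra.
  intros s Hs; apply Hw; auto. intros s Hs. apply (g_cont _ _ _ _ _ _ H). lra. apply Hw; auto.
Qed.

Lemma G0 lam w dw ddw q Z : H1D lam w dw ddw q -> Sorted Rlt Z ->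
  (forall s, 0 <= s -> (w s = 0 <-> In s Z)) -> Gf lam w dw 0 = 0.
Proof.
  intros H HS HZ. apply (is_mpv_unique lam (gf lam w dw) (fun s => w s = 0) 0 0).
  eapply G_spec; eauto. lra. apply (h_w0 _ _ _ _ _ H).
  exists nil. split. constructor. split. intros s; simpl; split; [tauto|lra].
  exists 1. split. lra. intros eps He. simpl. split. lra.
  exact (@is_RInt_point R_NormedModule (gf lam w dw) 0).
Qed.

Lemma nonzero_nbhd (w : R -> R) t : continuous w t -> w t <> 0 ->
  exists eta, 0 < eta /\ forall y, Rabs (y - t) < eta -> w y <> 0.
Proof.
  intros Hc Hn. destruct (cont_eps w t Hc (Rabs (w t)) (Rabs_pos_lt _ Hn)) as [eta [He H]].
  exists eta. split; auto. intros y Hy E. specialize (H y Hy). rewrite E in H.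
  replace (0 - w t) with (- w t) in H by ring. rewrite Rabs_Ropp in H. lra.
Qed.

Lemma RInt_cont_upper (f : R -> R) a t eta : 0 < eta ->
  (forall z, Rmin a (t - eta) <= z <= Rmax a (t + eta) -> continuous f z) ->
  continuous (fun y => RInt f a y) t.
Proof.
  intros He Hc. eapply D_cont.
  apply (is_derive_RInt f (fun y => RInt f a y) a t).
  - exists (mkposreal eta He). intros b Hb. unfold ball in Hb; simpl in Hb;
      unfold AbsRing_ball, abs, minus, plus, opp in Hb; simpl in Hb. apply Rabs_lt_between in Hb.
    apply cont_RInt. intros z Hz. apply Hc. split.
    + eapply Rle_trans; [|apply Hz]. apply Rmin_glb. apply Rmin_l. eapply Rle_trans. apply Rmin_r. lra.
    + eapply Rle_trans; [apply Hz|]. apply Rmax_lub. apply Rmax_l. eapply Rle_trans. 2: apply Rmax_r. lra.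
  - apply Hc. split. eapply Rle_trans. apply Rmin_r. lra. eapply Rle_trans. 2: apply Rmax_r. lra.
Qed.

Lemma G_cont lam w dw ddw q Z t : H1D lam w dw ddw q -> Sorted Rlt Z ->
  (forall s, 0 <= s -> (w s = 0 <-> In s Z)) -> 0 <= t -> w t <> 0 -> continuous (Gf lam w dw) t.
Proof.
  intros H HS HZ Ht Hw.
  assert (Hwc : continuous w t) by (eapply D_cont; apply (h_w _ _ _ _ _ H); auto).
  destruct (nonzero_nbhd w t Hwc Hw) as [eta [Heta Hn]].
  destruct (Rle_lt_or_eq_dec 0 t Ht) as [Tp|T0].
  - set (e := Rmin eta t / 2).
    assert (He : 0 < e /\ e <= eta / 2 /\ e <= t / 2).
    { unfold e. assert (0 < Rmin eta t) by (apply Rmin_pos; lra).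
      assert (Rmin eta t <= eta) by apply Rmin_l. assert (Rmin eta t <= t) by apply Rmin_r. lra. }
    apply (continuous_ext_loc _ (fun y => Gf lam w dw (t - e) + RInt (gf lam w dw) (t - e) y)).
    + exists (mkposreal e (proj1 He)). intros y Hy. unfold ball in Hy; simpl in Hy;
        unfold AbsRing_ball, abs, minus, plus, opp in Hy; simpl in Hy. apply Rabs_lt_between in Hy.
      symmetry. eapply G_ext; eauto. lra. intros s Hs. apply Hn. apply Rabs_lt_between. lra.
    + apply C_plus. apply C_const. apply (RInt_cont_upper _ _ _ e). lra.
      intros z Hz. rewrite Rmin_left in Hz by lra. rewrite Rmax_right in Hz by lra.
      apply (g_cont _ _ _ _ _ _ H). lra. apply Hn. apply Rabs_lt_between. lra.
  - subst t.
    assert (Hgc : forall z, Rabs z < eta -> continuous (gc lam w dw) z).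
    { intros z Hz. unfold gc. apply C_comp.
      apply C_mult. apply C_plus. apply C_id. apply continuous_Rabs. apply C_const.
      destruct (Rle_or_lt 0 z) as [Z0|Z0].
      - rewrite (Rabs_right z) in Hz |- * by lra. replace ((z + z) / 2) with z by field.
        apply (g_cont _ _ _ _ _ _ H). lra. apply Hn. rewrite Rminus_0_r, Rabs_right; lra.
      - rewrite (Rabs_left z) in Hz |- * by lra. replace ((z + - z) / 2) with 0 by field.
        apply (g_cont _ _ _ _ _ _ H). lra. apply Hn. rewrite Rminus_0_r, Rabs_R0; lra. }
    apply (continuous_ext_loc _ (fun y => RInt (gc lam w dw) 0 y)).
    + exists (mkposreal eta Heta). intros y Hy. unfold ball in Hy; simpl in Hy;
        unfold AbsRing_ball, abs, minus, plus, opp in Hy; simpl in Hy. rewrite Ropp_0, Rplus_0_r in Hy.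
      destruct (Rle_dec 0 y) as [Y|Y].
      2: { unfold Gf. destruct (Rle_dec 0 y); [lra|reflexivity]. }
      rewrite (G_ext lam w dw ddw q Z 0 y); auto. rewrite (G0 lam w dw ddw q Z); auto. rewrite Rplus_0_l.
      apply RInt_ext. intros z Hz. rewrite Rmin_left in Hz by lra. rewrite Rmax_right in Hz by lra.
      unfold gc. rewrite Rabs_right by lra. f_equal. field.
      intros s Hs. apply Hn. rewrite Rminus_0_r. apply Rabs_lt_between. apply Rabs_lt_between in Hy. lra.
    + apply (RInt_cont_upper _ _ _ (eta / 2)). lra.
      intros z Hz. apply Hgc. rewrite Rmin_right in Hz by lra. rewrite Rmax_right in Hz by lra.
      apply Rabs_lt_between. lra.
Qed.


Lemma HL_expd lam : HL (fun d => exp (d / lam)) 1.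
Proof. apply (HL_ext (fun d => exp (/ lam * d))). exists 1; split; [lra|]. intros d _. f_equal. unfold Rdiv; ring. apply HL_exp_c. Qed.
Lemma HL_expmd lam : HL (fun d => exp (- d / lam)) 1.
Proof. apply (HL_ext (fun d => exp (- / lam * d))). exists 1; split; [lra|]. intros d _. f_equal. unfold Rdiv; ring. apply HL_exp_c. Qed.

Lemma D_expmlam lam s : lam <> 0 -> is_derive (fun t => exp (- t / lam)) s (- exp (- s / lam) / lam).
Proof.
  intros Hl. apply (D_ext (fun t => exp (- / lam * t))). intros; f_equal; unfold Rdiv; ring.
  eapply D_eq. 2: apply D_exp, D_scal, D_id. replace (- / lam * s) with (- s / lam) by (unfold Rdiv; ring).
  unfold Rdiv; ring.
Qed.

Lemma C_expmlam lam s : continuous (fun t => exp (- t / lam)) s.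
Proof. apply C_exp. apply C_mult. apply C_opp. apply C_id. apply C_const. Qed.

Definition If lam (w dw : R -> R) t := exp (- t / lam) * sgn (w t) * Gf lam w dw t.

Lemma omega_eq lam w dw t : lam <> 0 ->
  omega_integrand lam w dw t = fun s => (exp (- t / lam) * sgn (w t)) * gf lam w dw s.
Proof.
  intros Hl. apply functional_extensionality. intros s. unfold omega_integrand, gf, Ff, Rf.
  rewrite sgn_mult. replace (exp (- (t - s) / lam)) with (exp (- t / lam) * exp (s / lam)).
  ring. rewrite <- exp_plus. f_equal. field; auto.
Qed.

Lemma I_spec lam w dw ddw q Z t : H1D lam w dw ddw q -> Sorted Rlt Z ->
  (forall s, 0 <= s -> (w s = 0 <-> In s Z)) -> 0 <= t -> w t <> 0 ->
  is_mpv lam (omega_integrand lam w dw t) (fun s => w s = 0) 0 t (If lam w dw t).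
Proof.
  intros H HS HZ Ht Hw. assert (Hl : 0 < lam) by apply (h_lam _ _ _ _ _ H).
  rewrite omega_eq by lra. unfold If. apply is_mpv_scal. eapply G_spec; eauto.
Qed.

Lemma I_cont lam w dw ddw q Z t : H1D lam w dw ddw q -> Sorted Rlt Z ->
  (forall s, 0 <= s -> (w s = 0 <-> In s Z)) -> 0 <= t -> w t <> 0 -> continuous (If lam w dw) t.
Proof.
  intros H HS HZ Ht Hw. unfold If. apply C_mult. apply C_mult. apply C_expmlam.
  apply sgn_cont; auto. eapply D_cont; apply (h_w _ _ _ _ _ H); auto.
  eapply G_cont; eauto.
Qed.

Definition Tf lam q p0 t := RInt (fun r => exp (- r / lam) * Qf lam q r) p0 t.

Lemma T_der lam w dw ddw q p0 t : H1D lam w dw ddw q -> 0 < p0 -> 0 < t ->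
  is_derive (Tf lam q p0) t (exp (- t / lam) * Qf lam q t).
Proof.
  intros H Hp Ht.
  assert (Hc : forall r, 0 < r -> continuous (fun r => exp (- r / lam) * Qf lam q r) r).
  { intros r Hr. apply C_mult. apply C_expmlam. eapply D_cont, Q_der; eauto. }
  apply (is_derive_RInt (fun r => exp (- r / lam) * Qf lam q r) (Tf lam q p0) p0 t).
  - apply locally_pos; auto. intros b Hb. apply cont_RInt. intros z Hz. apply Hc.
    assert (Rmin p0 b <= z) by apply Hz. assert (0 < Rmin p0 b) by (apply Rmin_pos; lra). lra.
  - apply Hc; auto.
Qed.

Definition Psi lam (w : R -> R) q p0 A t := - lam * A * exp (- t / lam) - / 2 * ln (w t ^ 2) - Tf lam q p0 t.

Lemma Psi_der lam w dw ddw q p0 A t : H1D lam w dw ddw q -> 0 < p0 -> 0 < t -> w t <> 0 ->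
  is_derive (Psi lam w q p0 A) t (A * exp (- t / lam) - Rf w dw t - exp (- t / lam) * Qf lam q t).
Proof.
  intros H Hp Ht Hw. assert (Hl : 0 < lam) by apply (h_lam _ _ _ _ _ H).
  assert (Hw2' : 0 < w t * w t) by (apply Rsqr_pos_lt; auto).
  assert (Hw2 : 0 < w t ^ 2) by (simpl; lra).
  unfold Psi. eapply D_eq. 2: { apply D_minus. apply D_minus. apply D_scal. apply D_expmlam. lra.
    apply D_scal. apply D_ln. apply is_derive_pow. apply (h_w _ _ _ _ _ H); lra. auto.
    apply (T_der _ _ _ _ _ p0 t H Hp Ht). }
  unfold Rf. simpl. field. split; lra.
Qed.


Lemma Phif_eq lam w dw q t : Phif lam w dw q t = - (Rf w dw t * exp (t / lam)) - Qf lam q t.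
Proof. reflexivity. Qed.

Lemma I_pole lam w dw ddw q Z p : H1D lam w dw ddw q -> Sorted Rlt Z ->
  (forall s, 0 <= s -> (w s = 0 <-> In s Z)) -> 0 < p -> w p = 0 -> pole_ok lam (If lam w dw) p.
Proof.
  intros H HS HZ Hp Hw. assert (Hl : 0 < lam) by apply (h_lam _ _ _ _ _ H).
  destruct (zero_local _ _ _ _ _ p H Hp Hw) as [rho [Hr1 [Hr2 [sL [HsL [HL1 HR1]]]]]].
  assert (RIL : forall a b, p - rho <= a <= b -> b < p ->
     RInt (gf lam w dw) a b = sL * Phif lam w dw q b - sL * Phif lam w dw q a).
  { intros a b Hab Hb. apply RI_unique. apply (RInt_der (fun s => sL * Phif lam w dw q s)).
    - intros z Hz. rewrite Rmin_left in Hz by lra; rewrite Rmax_right in Hz by lra.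
      destruct (HL1 z ltac:(lra)) as [N E]. unfold gf. rewrite E. apply D_scal. apply (Phi_der _ _ _ _ _ _ H); lra.
    - intros z Hz. rewrite Rmin_left in Hz by lra; rewrite Rmax_right in Hz by lra.
      apply (g_cont _ _ _ _ _ _ H). lra. apply HL1; lra. }
  assert (RIR : forall a b, p < a <= b -> b <= p + rho ->
     RInt (gf lam w dw) a b = - sL * Phif lam w dw q b - - sL * Phif lam w dw q a).
  { intros a b Hab Hb. apply RI_unique. apply (RInt_der (fun s => - sL * Phif lam w dw q s)).
    - intros z Hz. rewrite Rmin_left in Hz by lra; rewrite Rmax_right in Hz by lra.
      destruct (HR1 z ltac:(lra)) as [N E]. unfold gf. rewrite E. apply D_scal. apply (Phi_der _ _ _ _ _ _ H); lra.
    - intros z Hz. rewrite Rmin_left in Hz by lra; rewrite Rmax_right in Hz by lra.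
      apply (g_cont _ _ _ _ _ _ H). lra. apply HR1; lra. }
  set (AL := sL * Gf lam w dw (p - rho) - Phif lam w dw q (p - rho)).
  set (AR := - sL * Gf lam w dw (p + rho) - Phif lam w dw q (p + rho)).
  assert (IL : forall t, p - rho <= t < p ->
     If lam w dw t = AL * exp (- t / lam) - Rf w dw t - exp (- t / lam) * Qf lam q t).
  { intros t Ht. unfold If. destruct (HL1 t Ht) as [N E]. rewrite E.
    rewrite (G_ext lam w dw ddw q Z (p - rho) t); auto; [|lra|intros s Hs; apply HL1; lra].
    rewrite (RIL (p - rho) t) by lra. rewrite (Phif_eq lam w dw q t). unfold AL.
    assert (E2 : exp (- t / lam) * exp (t / lam) = 1) by (rewrite <- exp_plus, <- exp_0; f_equal; field; lra).
    apply Rminus_diag_uniq.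
    transitivity (- Rf w dw t * (exp (- t / lam) * exp (t / lam) - 1)).
    destruct HsL as [-> | ->]; ring. rewrite E2; ring. }
  assert (IR : forall t, p < t <= p + rho ->
     If lam w dw t = AR * exp (- t / lam) - Rf w dw t - exp (- t / lam) * Qf lam q t).
  { intros t Ht. unfold If. destruct (HR1 t Ht) as [N E]. rewrite E.
    assert (G1 := G_ext lam w dw ddw q Z t (p + rho) H HS HZ ltac:(lra) ltac:(intros s Hs; apply HR1; lra)).
    rewrite (RIR t (p + rho)) in G1 by lra.
    replace (Gf lam w dw t) with (Gf lam w dw (p + rho) - (- sL * Phif lam w dw q (p + rho) - - sL * Phif lam w dw q t)) by lra.
    rewrite (Phif_eq lam w dw q t). unfold AR.
    assert (E2 : exp (- t / lam) * exp (t / lam) = 1) by (rewrite <- exp_plus, <- exp_0; f_equal; field; lra).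
    apply Rminus_diag_uniq.
    transitivity (- Rf w dw t * (exp (- t / lam) * exp (t / lam) - 1)).
    destruct HsL as [-> | ->]; ring. rewrite E2; ring. }
  exists rho. split; auto.
  exists (Psi lam w q (p - rho) AL), (Psi lam w q (p - rho) AR). split; [|split].
  - intros s Hs. rewrite IL by auto. apply (Psi_der _ _ _ _ _ _ _ _ H); try lra. apply HL1; auto.
  - intros s Hs. rewrite IR by auto. apply (Psi_der _ _ _ _ _ _ _ _ H); try lra. apply HR1; auto.
  - destruct (Z4 _ _ _ _ _ p H Hp Hw) as [L4 HL4].
    assert (Tc : continuous (Tf lam q (p - rho)) p) by (eapply D_cont, T_der; eauto; lra).
    eexists. apply (HL_ext (fun d => - lam * AL * exp (- p / lam) * (exp (d / lam) * exp (d / lam))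
       + lam * AR * exp (- p / lam) * (exp (- d / lam) * exp (- d / lam))
       - / 2 * (exp (d / lam) * ln (w (p - d) ^ 2) - exp (- d / lam) * ln (w (p + d) ^ 2))
       - exp (d / lam) * Tf lam q (p - rho) (p - d) + exp (- d / lam) * Tf lam q (p - rho) (p + d))).
    + exists 1. split; [lra|]. intros d _. unfold Psi.
      replace (exp (- (p - d) / lam)) with (exp (- p / lam) * exp (d / lam)) by (rewrite <- exp_plus; f_equal; field; lra).
      replace (exp (- (p + d) / lam)) with (exp (- p / lam) * exp (- d / lam)) by (rewrite <- exp_plus; f_equal; field; lra).
      ring.
    + apply HL_plus. apply HL_minus. apply HL_minus. apply HL_plus.
      apply HL_mult. apply HL_const. apply HL_mult; apply HL_expd.
      apply HL_mult. apply HL_const. apply HL_mult; apply HL_expmd.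
      apply HL_mult. apply HL_const. exact HL4.
      apply HL_mult. apply HL_expd. apply HL_shiftm; auto.
      apply HL_mult. apply HL_expmd. apply HL_shift; auto.
Qed.


Lemma outer_exists lam w dw ddw q Z t : H1D lam w dw ddw q -> Sorted Rlt Z ->
  (forall s, 0 <= s -> (w s = 0 <-> In s Z)) -> 0 <= t -> w t <> 0 ->
  exists l, is_mpv lam (If lam w dw) (fun s => w s = 0) 0 t l.
Proof.
  intros H HS HZ Ht Hwt.
  destruct (sub_poles Z 0 t HS) as [P [HP1 HP2]].
  apply (GM lam (If lam w dw) (fun s => w s = 0) 0 t P); auto.
  - apply (h_lam _ _ _ _ _ H).
  - apply (h_w0 _ _ _ _ _ H).
  - intros s. rewrite HP2. split; intros [A B]; split; auto. apply HZ; auto; lra. apply HZ; auto; lra.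
  - intros z Hz Hn. apply (I_cont lam w dw ddw q Z z H HS HZ); [lra|exact Hn].
  - intros p Hp. apply HP2 in Hp. destruct Hp as [A B]. apply (I_pole lam w dw ddw q Z p H HS HZ); [lra|apply HZ; auto; lra].
Qed.

Definition Jf lam (w dw : R -> R) t :=
  epsilon (inhabits 0) (fun l => is_mpv lam (If lam w dw) (fun s => w s = 0) 0 t l).

Lemma J_spec lam w dw ddw q Z t : H1D lam w dw ddw q -> Sorted Rlt Z ->
  (forall s, 0 <= s -> (w s = 0 <-> In s Z)) -> 0 <= t -> w t <> 0 ->
  is_mpv lam (If lam w dw) (fun s => w s = 0) 0 t (Jf lam w dw t).
Proof. intros. unfold Jf. apply epsilon_spec. eapply outer_exists; eauto. Qed.

Lemma J_ext lam w dw ddw q Z t1 t2 : H1D lam w dw ddw q -> Sorted Rlt Z ->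
  (forall s, 0 <= s -> (w s = 0 <-> In s Z)) -> 0 <= t1 <= t2 -> (forall s, t1 <= s <= t2 -> w s <> 0) ->
  Jf lam w dw t2 = Jf lam w dw t1 + RInt (If lam w dw) t1 t2.
Proof.
  intros H HS HZ Ht Hw.
  apply (is_mpv_unique lam (If lam w dw) (fun s => w s = 0) 0 t2).
  eapply J_spec; eauto. lra. apply Hw; lra.
  apply is_mpv_ext. eapply J_spec; eauto. lra. apply Hw; lra. lra.
  intros s Hs; apply Hw; auto. intros s Hs. apply (I_cont lam w dw ddw q Z s H HS HZ); [lra|apply Hw; auto].
Qed.

Lemma mono_lim (f : R -> R) T C : (forall a b, T <= a <= b -> f a <= f b) -> (forall a, T <= a -> f a <= C) ->
  exists L, filterlim f (Rbar_locally p_infty) (locally L).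
Proof.
  intros Hm Hb.
  destruct (completeness (fun y => exists a, T <= a /\ y = f a)) as [L [HL1 HL2]].
  { exists C. intros y [a [Ha ->]]. apply Hb; auto. }
  { exists (f T). exists T. split; [lra|auto]. }
  exists L. apply (proj2 (filterlim_locally f L)). intros [eps He].
  assert (Ex : exists a, T <= a /\ L - eps < f a).
  { apply Classical_Prop.NNPP. intros NE.
    assert (L <= L - eps). apply HL2. intros y [a [Ha ->]].
    destruct (Rle_or_lt (f a) (L - eps)); auto. exfalso; apply NE; exists a; auto. simpl in H. lra. }
  destruct Ex as [a [Ha Hfa]]. exists a. intros x Hx.
  unfold ball; simpl; unfold AbsRing_ball, abs, minus, plus, opp; simpl.
  assert (f a <= f x) by (apply Hm; lra). assert (f x <= L) by (apply HL1; exists x; split; auto; lra).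
  apply Rabs_lt_between. simpl. lra.
Qed.


Lemma RI_plus (f g : R -> R) a b x y : is_RInt f a b x -> is_RInt g a b y -> is_RInt (fun t => f t + g t) a b (x + y).
Proof. intros H1 H2. exact (is_RInt_plus f g a b x y H1 H2). Qed.
Lemma RI_chasles (f : R -> R) a b c x y : is_RInt f a b x -> is_RInt f b c y -> is_RInt f a c (x + y).
Proof. intros H1 H2. exact (is_RInt_Chasles f a b c x y H1 H2). Qed.
Lemma RInt_pt (f : R -> R) a : RInt f a a = 0.
Proof. apply RI_unique. exact (@is_RInt_point R_NormedModule f a). Qed.

Lemma FL_plus {T} (F : (T -> Prop) -> Prop) {FF : Filter F} (f g : T -> R) a b :
  filterlim f F (locally a) -> filterlim g F (locally b) -> filterlim (fun x => f x + g x) F (locally (a + b)).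
Proof. intros Hf Hg. apply (filterlim_comp_2 f g Rplus Hf Hg). apply (filterlim_plus a b). Qed.
Lemma FL_mult {T} (F : (T -> Prop) -> Prop) {FF : Filter F} (f g : T -> R) a b :
  filterlim f F (locally a) -> filterlim g F (locally b) -> filterlim (fun x => f x * g x) F (locally (a * b)).
Proof. intros Hf Hg. apply (filterlim_comp_2 f g Rmult Hf Hg). apply (filterlim_mult a b). Qed.

Lemma exp_inf lam : 0 < lam -> filterlim (fun t => exp (- t / lam)) (Rbar_locally p_infty) (locally 0).
Proof.
  intros Hl. apply (proj2 (filterlim_locally _ 0)). intros [eps He]. simpl.
  exists (- lam * ln eps). intros x Hx.
  unfold ball; simpl; unfold AbsRing_ball, abs, minus, plus, opp; simpl.
  rewrite Ropp_0, Rplus_0_r, Rabs_right by (apply Rle_ge, Rlt_le, exp_pos).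
  rewrite <- (exp_ln eps) by auto. apply exp_increasing.
  apply (Rmult_lt_reg_l lam); auto. replace (lam * (- x / lam)) with (- x) by (field; lra). lra.
Qed.

Lemma sign_const (w : R -> R) a b : a <= b -> (forall s, a <= s <= b -> continuous w s) ->
  (forall s, a <= s <= b -> w s <> 0) -> sgn (w b) = sgn (w a).
Proof.
  intros Hab Hc Hn. destruct (Rle_lt_or_eq_dec a b Hab) as [Lt|Eq]; [|subst; auto].
  assert (Wa := Hn a ltac:(lra)). assert (Wb := Hn b ltac:(lra)).
  destruct (Rtotal_order (w a) 0) as [A|[A|A]]; [|contradiction|];
  destruct (Rtotal_order (w b) 0) as [B|[B|B]]; try contradiction.
  - rewrite !sgn_neg; auto.
  - exfalso. destruct (Ranalysis5.IVT_interv w a b) as [z [Hz Ez]]; auto.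
    intros s Hs; apply C_pt; apply Hc; auto. apply (Hn z); auto.
  - exfalso. destruct (Ranalysis5.IVT_interv (fun s => - w s) a b) as [z [Hz Ez]]; auto.
    intros s Hs; apply C_pt; apply C_opp; apply Hc; auto. lra. lra. apply (Hn z); auto. lra.
  - rewrite !sgn_pos; auto.
Qed.

Lemma tail_lim lam w dw ddw q Z T0 m (E Sd : R -> R) : H1D lam w dw ddw q -> Sorted Rlt Z ->
  (forall s, 0 <= s -> (w s = 0 <-> In s Z)) -> 0 < T0 -> 0 < m -> (forall t, T0 <= t -> m <= Rabs (w t)) ->
  (forall t, 0 <= t -> is_derive E t (- Sd t)) -> (forall t, 0 <= t -> 0 <= E t) ->
  (forall t, 0 <= t -> dw t ^ 2 <= 2 * Sd t) ->
  exists Om, filterlim (Jf lam w dw) (Rbar_locally p_infty) (locally Om).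
Proof.
  intros H HS HZ HT0 Hm HmT HE1 HE2 HE3.
  assert (Hl : 0 < lam) by apply (h_lam _ _ _ _ _ H).
  assert (W : forall t, T0 <= t -> w t <> 0).
  { intros t Ht E0. specialize (HmT t Ht). rewrite E0, Rabs_R0 in HmT. lra. }
  set (T1 := T0 + 1).
  set (s0 := sgn (w T1)).
  assert (Hs0 : forall t, T1 <= t -> sgn (w t) = s0).
  { intros t Ht. apply sign_const; auto. intros s Hs. eapply D_cont; apply (h_w _ _ _ _ _ H); unfold T1 in *; lra.
    intros s Hs; apply W; unfold T1 in *; lra. }
  assert (Hs02 : s0 * s0 = 1) by (apply sgn_sq; apply W; unfold T1; lra).
  set (Phi := Phif lam w dw q).
  assert (HPhi : forall t, T0 < t -> is_derive Phi t (Ff w dw lam t)).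
  { intros t Ht. apply (Phi_der _ _ _ _ _ _ H); [lra|apply W; lra]. }
  set (N := fun t => exp (- t / lam) * (Phi t - Phi T1)).
  set (a := s0 * Gf lam w dw T1).
  assert (HI : forall t, T1 <= t -> If lam w dw t = a * exp (- t / lam) + N t).
  { intros t Ht. unfold If. rewrite (Hs0 t Ht).
    rewrite (G_ext lam w dw ddw q Z T1 t); auto; [|unfold T1 in *; lra|intros s Hs; apply W; unfold T1 in *; lra].
    assert (RI : RInt (gf lam w dw) T1 t = s0 * Phi t - s0 * Phi T1).
    { apply RI_unique. apply (RInt_der (fun s => s0 * Phi s)).
      - intros z Hz. rewrite Rmin_left in Hz by lra; rewrite Rmax_right in Hz by lra.
        unfold gf. rewrite (Hs0 z) by lra. apply D_scal. apply HPhi. unfold T1 in *; lra.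
      - intros z Hz. rewrite Rmin_left in Hz by lra; rewrite Rmax_right in Hz by lra.
        apply (g_cont _ _ _ _ _ _ H). unfold T1 in *; lra. apply W; unfold T1 in *; lra. }
    rewrite RI. unfold N, a. apply Rminus_diag_uniq.
    transitivity (exp (- t / lam) * (Phi t - Phi T1) * (s0 * s0 - 1)). ring. rewrite Hs02; ring. }
  assert (HN0 : forall t, T1 <= t -> 0 <= N t).
  { intros t Ht. unfold N. apply Rmult_le_pos. left; apply exp_pos.
    destruct (MVT_R Phi (Ff w dw lam) T1 t Ht) as [c [Hc Ec]].
    { intros z Hz. apply HPhi. unfold T1 in *; lra. }
    rewrite Ec. apply Rmult_le_pos; [|lra]. unfold Ff. apply Rmult_le_pos. apply pow2_ge_0. left; apply exp_pos. }
  assert (HNc : forall t, T0 < t -> continuous N t).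
  { intros t Ht. unfold N. apply C_mult. apply C_expmlam. apply C_minus. eapply D_cont. apply HPhi; auto. apply C_const. }
  set (S := fun t => RInt N T1 t).
  assert (HSi : forall t, T1 <= t -> is_RInt N T1 t (S t)).
  { intros t Ht. apply cont_RInt. intros z Hz. rewrite Rmin_left in Hz by lra; rewrite Rmax_right in Hz by lra.
    apply HNc. unfold T1 in *; lra. }
  assert (HJ : forall t, T1 <= t -> Jf lam w dw t = Jf lam w dw T1 + (a * (lam * exp (- T1 / lam) - lam * exp (- t / lam)) + S t)).
  { intros t Ht. rewrite (J_ext lam w dw ddw q Z T1 t); auto; [|unfold T1 in *; lra|intros s Hs; apply W; unfold T1 in *; lra].
    f_equal. apply RI_unique.
    apply (is_RInt_ext (fun s => a * exp (- s / lam) + N s)).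
    { intros x Hx. rewrite Rmin_left in Hx by lra; rewrite Rmax_right in Hx by lra. symmetry; apply HI; lra. }
    apply RI_plus; [|apply HSi; auto].
    replace (a * (lam * exp (- T1 / lam) - lam * exp (- t / lam))) with
      ((- a * lam * exp (- t / lam)) - (- a * lam * exp (- T1 / lam))) by ring.
    apply (RInt_der (fun s => - a * lam * exp (- s / lam))).
    - intros z Hz. eapply D_eq. 2: { apply D_scal. apply D_expmlam. lra. } field. lra.
    - intros z Hz. apply C_mult. apply C_const. apply C_expmlam. }
  assert (HSm : forall x y, T1 <= x <= y -> S x <= S y).
  { intros x y Hxy. assert (Ch := RI_chasles N T1 x y (S x) (RInt N x y) (HSi x ltac:(lra))
       (cont_RInt N x y ltac:(intros z Hz; rewrite Rmin_left in Hz by lra; rewrite Rmax_right in Hz by lra;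
                                apply HNc; unfold T1 in *; lra))).
    assert (E0 : S y = S x + RInt N x y) by (unfold S at 1; apply RI_unique; exact Ch).
    rewrite E0.
    assert (0 <= RInt N x y). apply RInt_ge_0. lra.
    eexists; apply cont_RInt. intros z Hz; rewrite Rmin_left in Hz by lra; rewrite Rmax_right in Hz by lra;
                                apply HNc; unfold T1 in *; lra.
    intros z Hz. apply HN0; lra. lra. }
  set (C := 2 * lam / m ^ 2 * E T1).
  assert (HSb : forall t, T1 <= t -> S t <= C).
  { intros t Ht.
    set (Lam := fun s => - lam * N s - 2 * lam / m ^ 2 * E s - S s).
    set (dLam := fun s => lam * (2 * Sd s / m ^ 2 - Rf w dw s ^ 2)).
    assert (HdL : forall s, T1 <= s -> is_derive Lam s (dLam s)).
    { intros s Hs. unfold Lam, dLam.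
      assert (DS : is_derive S s (N s)).
      { apply (is_derive_RInt N S T1 s).
        - exists (mkposreal 1 Rlt_0_1). intros b Hb. unfold ball in Hb; simpl in Hb;
            unfold AbsRing_ball, abs, minus, plus, opp in Hb; simpl in Hb. apply Rabs_lt_between in Hb.
          apply cont_RInt. intros z Hz. apply HNc.
          assert (Rmin T1 b <= z) by apply Hz. assert (T0 < Rmin T1 b) by (apply Rmin_glb_lt; unfold T1 in *; lra). lra.
        - apply HNc. unfold T1 in *; lra. }
      assert (DN : is_derive N s (- exp (- s / lam) / lam * (Phi s - Phi T1) + exp (- s / lam) * Ff w dw lam s)).
      { unfold N. eapply D_eq. 2: { apply D_mult. apply D_expmlam. lra. apply D_minus. apply HPhi. unfold T1 in *; lra. apply D_const. }
        cbv beta. ring. }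
      eapply D_eq. 2: { apply D_minus. apply D_minus. apply D_scal. exact DN. apply D_scal. apply HE1. unfold T1 in *; lra. exact DS. }
      unfold N, Ff. replace (exp (- s / lam) * (Rf w dw s ^ 2 * exp (s / lam))) with (Rf w dw s ^ 2 * (exp (- s / lam) * exp (s / lam))) by ring.
      rewrite <- exp_plus. replace (- s / lam + s / lam) with 0 by (field; lra). rewrite exp_0.
      field. split; [|lra]. assert (0 < m ^ 2) by (apply pow_lt; lra). lra. }
    destruct (MVT_R Lam dLam T1 t Ht) as [c [Hc Ec]]. { intros z Hz. apply HdL; lra. }
    assert (Hd : 0 <= dLam c).
    { unfold dLam. apply Rmult_le_pos; [lra|].
      assert (Wc : m <= Rabs (w c)) by (apply HmT; unfold T1 in *; lra).
      assert (Wc0 : w c <> 0) by (apply W; unfold T1 in *; lra).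
      assert (Hm2 : 0 < m ^ 2) by (apply pow_lt; lra).
      assert (Hw2 : m ^ 2 <= w c ^ 2) by (rewrite <- (pow2_abs (w c)); apply pow_incr; lra).
      assert (Hdw : dw c ^ 2 <= 2 * Sd c) by (apply HE3; unfold T1 in *; lra).
      assert (R2 : Rf w dw c ^ 2 = dw c ^ 2 / w c ^ 2) by (unfold Rf; field; auto).
      rewrite R2. assert (dw c ^ 2 / w c ^ 2 <= dw c ^ 2 / m ^ 2).
      { unfold Rdiv. apply Rmult_le_compat_l. apply pow2_ge_0. apply Rinv_le_contravar; auto. }
      assert (dw c ^ 2 / m ^ 2 <= 2 * Sd c / m ^ 2).
      { unfold Rdiv. apply Rmult_le_compat_r. left; apply Rinv_0_lt_compat; auto. auto. }
      lra. }
    assert (L0 : Lam T1 = - 2 * lam / m ^ 2 * E T1).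
    { unfold Lam, N, S. rewrite RInt_pt. unfold Rdiv. ring. }
    assert (Lt : Lam T1 <= Lam t) by nra.
    rewrite L0 in Lt. unfold Lam in Lt. unfold C.
    assert (0 <= N t) by (apply HN0; auto). assert (0 <= E t) by (apply HE2; unfold T1 in *; lra).
    assert (0 <= 2 * lam / m ^ 2 * E t).
    { apply Rmult_le_pos; auto. unfold Rdiv. apply Rmult_le_pos. lra. left; apply Rinv_0_lt_compat, pow_lt; lra. }
    nra. }
  destruct (mono_lim S T1 C HSm HSb) as [L HL].
  exists (Jf lam w dw T1 + (a * (lam * exp (- T1 / lam) - lam * 0) + L)).
  apply (filterlim_ext_loc (fun t => Jf lam w dw T1 + (a * (lam * exp (- T1 / lam) - lam * exp (- t / lam)) + S t))).
  { exists T1. intros x Hx. symmetry. apply HJ. lra. }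
  assert (FF : Filter (Rbar_locally p_infty)) by (apply Rbar_locally_filter).
  apply (@FL_plus _ _ FF). apply filterlim_const. apply (@FL_plus _ _ FF); auto.
  apply (@FL_mult _ _ FF). apply filterlim_const.
  apply (@FL_plus _ _ FF (fun _ => lam * exp (- T1 / lam)) (fun t => - (lam * exp (- t / lam))) _ (- (lam * 0))).
  apply filterlim_const.
  replace (- (lam * 0)) with ((-lam) * 0) by ring.
  apply (filterlim_ext (fun t => (- lam) * exp (- t / lam))). intros; ring.
  apply (@FL_mult _ _ FF). apply filterlim_const. apply exp_inf; auto.
Qed.


Lemma abstract_main lam w dw ddw q T0 m (E Sd : R -> R) : H1D lam w dw ddw q -> 0 < T0 -> 0 < m ->
  (forall t, T0 <= t -> m <= Rabs (w t)) ->
  (forall t, 0 <= t -> is_derive E t (- Sd t)) -> (forall t, 0 <= t -> 0 <= E t) ->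
  (forall t, 0 <= t -> dw t ^ 2 <= 2 * Sd t) ->
  Omega_well_defined_finite lam w dw.
Proof.
  intros H HT Hm HmT HE1 HE2 HE3.
  assert (W : forall t, T0 <= t -> w t <> 0).
  { intros t Ht E0. specialize (HmT t Ht). rewrite E0, Rabs_R0 in HmT. lra. }
  destruct (zeros_list _ _ _ _ _ T0 H HT W) as [Z [HS [HZ _]]].
  split. exists Z; auto.
  exists (If lam w dw). split. intros t Ht Hw. exact (I_spec lam w dw ddw q Z t H HS HZ Ht Hw).
  exists (Jf lam w dw). split. intros t Ht Hw. exact (J_spec lam w dw ddw q Z t H HS HZ Ht Hw).
  exact (tail_lim lam w dw ddw q Z T0 m E Sd H HS HZ HT Hm HmT HE1 HE2 HE3).
Qed.

Lemma sumR_ext m f g : (forall i, (i < m)%nat -> f i = g i) -> sumR m f = sumR m g.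
Proof. induction m; simpl; intros H; auto. rewrite IHm, H; auto; intros; apply H; lia. Qed.
Lemma sumR_plus m f g : sumR m (fun i => f i + g i) = sumR m f + sumR m g.
Proof. induction m; simpl; [ring|rewrite IHm; ring]. Qed.
Lemma sumR_scal m c f : sumR m (fun i => c * f i) = c * sumR m f.
Proof. induction m; simpl; [ring|rewrite IHm; ring]. Qed.
Lemma sumR_swap n d (a : nat -> nat -> R) :
  sumR n (fun i => sumR d (fun j => a i j)) = sumR d (fun j => sumR n (fun i => a i j)).
Proof.
  induction n; simpl. induction d; simpl; [auto|rewrite <- IHd; ring].
  rewrite IHn. rewrite <- sumR_plus. reflexivity.
Qed.
Lemma sumR_nonneg m f : (forall i, (i < m)%nat -> 0 <= f i) -> 0 <= sumR m f.
Proof. induction m; simpl; intros H; [lra|]. assert (0 <= f m) by (apply H; lia). assert (0 <= sumR m f) by (apply IHm; intros; apply H; lia). lra. Qed.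
Lemma sumR_ge_term m f k : (forall i, (i < m)%nat -> 0 <= f i) -> (k < m)%nat -> f k <= sumR m f.
Proof.
  induction m; simpl; intros H Hk; [lia|].
  destruct (Nat.eq_dec k m) as [->|Ne].
  - assert (0 <= sumR m f) by (apply sumR_nonneg; intros; apply H; lia). lra.
  - assert (f k <= sumR m f) by (apply IHm; [intros; apply H; lia|lia]). assert (0 <= f m) by (apply H; lia). lra.
Qed.
Lemma sumR_der m (F : R -> nat -> R) (F' : nat -> R) t0 :
  (forall i, (i < m)%nat -> is_derive (fun t => F t i) t0 (F' i)) ->
  is_derive (fun t => sumR m (F t)) t0 (sumR m F').
Proof.
  induction m; simpl; intros H. apply D_const.
  apply D_plus. apply IHm; intros; apply H; lia. apply H; lia.
Qed.
Lemma sumR_cont m (F : R -> nat -> R) t0 :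
  (forall i, (i < m)%nat -> continuous (fun t => F t i) t0) ->
  continuous (fun t => sumR m (F t)) t0.
Proof.
  induction m; simpl; intros H. apply C_const.
  apply C_plus. apply IHm; intros; apply H; lia. apply H; lia.
Qed.


Definition Sdf d (du dv : R -> nat -> R) t := sumR d (fun j => du t j ^ 2 + dv t j ^ 2).
Definition Ef n d x y lam (u v du dv : R -> nat -> R) t :=
  / INR n / 2 * sumR n (fun i => (y i - sumR d (fun j => x i j * (u t j * v t j))) ^ 2) + lam / 2 * Sdf d du dv t.

Lemma energy_der (n d : nat) (x : nat -> nat -> R) (y : nat -> R) (lam : R)
  (u v du dv ddu ddv : R -> nat -> R) (Hlam : 0 < lam)
  (Hu1 : forall t k, 0 <= t -> (k < d)%nat -> is_derive (fun s => u s k) t (du t k))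
  (Hv1 : forall t k, 0 <= t -> (k < d)%nat -> is_derive (fun s => v s k) t (dv t k))
  (Hu2 : forall t k, 0 <= t -> (k < d)%nat -> is_derive (fun s => du s k) t (ddu t k))
  (Hv2 : forall t k, 0 <= t -> (k < d)%nat -> is_derive (fun s => dv s k) t (ddv t k))
  (Hodeu : forall t k, 0 <= t -> (k < d)%nat ->
     lam * ddu t k + du t k + gradL n d x y (fun j => u t j * v t j) k * v t k = 0)
  (Hodev : forall t k, 0 <= t -> (k < d)%nat ->
     lam * ddv t k + dv t k + gradL n d x y (fun j => u t j * v t j) k * u t k = 0)
  t (Ht : 0 <= t) : is_derive (Ef n d x y lam u v du dv) t (- Sdf d du dv t).
Proof.
  set (r := fun i => y i - sumR d (fun j => x i j * (u t j * v t j))).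
  set (th := fun j => du t j * v t j + u t j * dv t j).
  unfold Ef.
  eapply D_eq. 2: { apply D_plus. apply D_scal.
    apply (sumR_der n (fun t i => (y i - sumR d (fun j => x i j * (u t j * v t j))) ^ 2)
       (fun i => INR 2 * (0 - sumR d (fun j => x i j * th j)) * r i ^ pred 2)).
    intros i Hi. apply is_derive_pow. apply D_minus. apply D_const.
    apply (sumR_der d (fun t j => x i j * (u t j * v t j)) (fun j => x i j * th j)).
    intros j Hj. apply D_scal. unfold th. apply D_mult; [apply Hu1|apply Hv1]; auto.
    apply D_scal. unfold Sdf.
    apply (sumR_der d (fun t j => du t j ^ 2 + dv t j ^ 2)
       (fun j => INR 2 * ddu t j * du t j ^ pred 2 + INR 2 * ddv t j * dv t j ^ pred 2)).
    intros j Hj. apply D_plus; apply is_derive_pow; auto. }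
  assert (S1 : sumR n (fun i => INR 2 * (0 - sumR d (fun j => x i j * th j)) * r i ^ pred 2)
      = -2 * sumR d (fun j => th j * sumR n (fun i => r i * x i j))).
  { transitivity (sumR n (fun i => sumR d (fun j => -2 * (th j * (r i * x i j))))).
    - apply sumR_ext. intros i Hi. rewrite sumR_scal.
      rewrite (sumR_ext d (fun j => th j * (r i * x i j)) (fun j => r i * (x i j * th j))) by (intros; ring).
      rewrite sumR_scal. simpl. ring.
    - rewrite sumR_swap. rewrite <- sumR_scal. apply sumR_ext. intros j Hj.
      rewrite sumR_scal. rewrite <- (sumR_scal n (th j)). f_equal. }
  assert (S2 : sumR d (fun j => INR 2 * ddu t j * du t j ^ pred 2 + INR 2 * ddv t j * dv t j ^ pred 2)
      = 2 / lam * sumR d (fun j => - (du t j ^ 2 + dv t j ^ 2)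
          + (1 / INR n) * (th j * sumR n (fun i => r i * x i j)))).
  { rewrite <- sumR_scal. apply sumR_ext. intros j Hj.
    assert (G : gradL n d x y (fun j => u t j * v t j) j = -(1 / INR n) * sumR n (fun i => r i * x i j))
      by (unfold gradL, r; reflexivity).
    assert (Eu := Hodeu t j Ht Hj). assert (Ev := Hodev t j Ht Hj). rewrite G in Eu, Ev.
    replace (ddu t j) with ((lam * ddu t j) / lam) by (field; lra).
    replace (ddv t j) with ((lam * ddv t j) / lam) by (field; lra).
    replace (lam * ddu t j) with (- du t j - -(1 / INR n) * sumR n (fun i => r i * x i j) * v t j) by lra.
    replace (lam * ddv t j) with (- dv t j - -(1 / INR n) * sumR n (fun i => r i * x i j) * u t j) by lra.
    unfold th. generalize (1 / INR n) (sumR n (fun i => r i * x i j)); intros c Sj. simpl. field. lra. }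
  rewrite S1, S2. unfold Sdf.
  rewrite (sumR_plus d (fun j => - (du t j ^ 2 + dv t j ^ 2))).
  rewrite (sumR_ext d (fun j => - (du t j ^ 2 + dv t j ^ 2)) (fun j => -1 * (du t j ^ 2 + dv t j ^ 2))) by (intros; ring).
  rewrite sumR_scal, sumR_scal.
  rewrite <- (Rmult_assoc (lam / 2) (2 / lam)).
  replace (lam / 2 * (2 / lam)) with 1 by (field; lra). rewrite Rmult_1_l.
  unfold Rdiv. generalize (/ INR n); intros c. field.
Qed.


Lemma lim_pinfty_eps (f : R -> R) l : is_lim f p_infty (Finite l) ->
  forall eps, 0 < eps -> exists M, forall t, M < t -> Rabs (f t - l) < eps.
Proof.
  intros H eps He. unfold is_lim in H.
  assert (H' := proj1 (filterlim_locally f l) H (mkposreal eps He)). simpl in H'.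
  destruct H' as [M HM]. exists M. intros t Ht. specialize (HM t Ht).
  unfold ball in HM; simpl in HM; unfold AbsRing_ball, abs, minus, plus, opp in HM; simpl in HM. exact HM.
Qed.

Theorem lemma1
  (n d : nat) (x : nat -> nat -> R) (y : nat -> R) (lam : R)
  (u v du dv ddu ddv : R -> nat -> R)
  (Hlam : 0 < lam)
  (Hu1 : forall t k, 0 <= t -> (k < d)%nat -> is_derive (fun s => u s k) t (du t k))
  (Hv1 : forall t k, 0 <= t -> (k < d)%nat -> is_derive (fun s => v s k) t (dv t k))
  (Hu2 : forall t k, 0 <= t -> (k < d)%nat -> is_derive (fun s => du s k) t (ddu t k))
  (Hv2 : forall t k, 0 <= t -> (k < d)%nat -> is_derive (fun s => dv s k) t (ddv t k))
  (Hodeu : forall t k, 0 <= t -> (k < d)%nat ->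
     lam * ddu t k + du t k + gradL n d x y (fun j => u t j * v t j) k * v t k = 0)
  (Hodev : forall t k, 0 <= t -> (k < d)%nat ->
     lam * ddv t k + dv t k + gradL n d x y (fun j => u t j * v t j) k * u t k = 0)
  (Hdu0 : forall k, (k < d)%nat -> du 0 k = 0)
  (Hdv0 : forall k, (k < d)%nat -> dv 0 k = 0)
  (Hbal0 : forall k, (k < d)%nat -> Rabs (u 0 k ^ 2 - v 0 k ^ 2) <> 0)
  (Hbdd : exists M, forall t k, 0 <= t -> (k < d)%nat ->
     Rabs (u t k) <= M /\ Rabs (v t k) <= M)
  (Hbalinf : exists Dinf : nat -> R, forall k, (k < d)%nat ->
     is_lim (fun t => Rabs (u t k ^ 2 - v t k ^ 2)) p_infty (Finite (Dinf k)) /\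
     Dinf k <> 0) :
  forall k, (k < d)%nat -> forall sigma : R, (sigma = 1 \/ sigma = -1) ->
    Omega_well_defined_finite lam
      (fun t => u t k + sigma * v t k) (fun t => du t k + sigma * dv t k).
Proof.
  intros k Hk sigma Hsig.
  assert (Hs2 : sigma * sigma = 1) by (destruct Hsig; subst; ring).
  set (w := fun t => u t k + sigma * v t k).
  set (dw := fun t => du t k + sigma * dv t k).
  set (ddw := fun t => ddu t k + sigma * ddv t k).
  set (q := fun t => sigma * gradL n d x y (fun j => u t j * v t j) k).
  assert (H : H1D lam w dw ddw q).
  { constructor.
    - auto.
    - intros t Ht. unfold w, dw. apply D_plus. apply Hu1; auto. apply D_scal. apply Hv1; auto.
    - intros t Ht. unfold dw, ddw. apply D_plus. apply Hu2; auto. apply D_scal. apply Hv2; auto.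
    - intros t Ht. unfold w, dw, ddw, q. assert (Eu := Hodeu t k Ht Hk). assert (Ev := Hodev t k Ht Hk).
      destruct Hsig as [-> | ->]; lra.
    - intros t Ht. unfold q. apply C_mult. apply C_const. unfold gradL. apply C_mult. apply C_const.
      apply (sumR_cont n (fun t i => (y i - sumR d (fun j => x i j * (u t j * v t j))) * x i k)).
      intros i Hi. apply C_mult; [|apply C_const]. apply C_minus. apply C_const.
      apply (sumR_cont d (fun t j => x i j * (u t j * v t j))). intros j Hj. apply C_mult. apply C_const.
      apply C_mult; eapply D_cont; [apply Hu1|apply Hv1]; auto.
    - unfold w. intros E0. apply (Hbal0 k Hk).
      replace (u 0 k ^ 2 - v 0 k ^ 2) with ((u 0 k + sigma * v 0 k) * (u 0 k - sigma * v 0 k))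
        by (destruct Hsig; subst; ring).
      rewrite E0, Rmult_0_l, Rabs_R0. reflexivity. }
  destruct Hbdd as [M HM]. destruct Hbalinf as [Dinf HD]. destruct (HD k Hk) as [Hlim HDn].
  set (D := Dinf k) in *.
  assert (HDp : 0 < D).
  { destruct (Rtotal_order D 0) as [Lt|[Eq|Gt]]; auto; [|contradiction].
    destruct (lim_pinfty_eps _ _ Hlim (- D) ltac:(lra)) as [M0 HM0].
    specialize (HM0 (M0 + 1) ltac:(lra)). apply Rabs_lt_between in HM0.
    assert (0 <= Rabs (u (M0 + 1) k ^ 2 - v (M0 + 1) k ^ 2)) by apply Rabs_pos. lra. }
  destruct (lim_pinfty_eps _ _ Hlim (D / 2) ltac:(lra)) as [M0 HM0].
  set (T0 := Rmax 1 (M0 + 1)).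
  assert (HT0 : 1 <= T0 /\ M0 + 1 <= T0) by (split; [apply Rmax_l|apply Rmax_r]).
  set (m := D / (4 * (Rabs M + 1))).
  assert (HMp : 0 < Rabs M + 1) by (assert (0 <= Rabs M) by apply Rabs_pos; lra).
  apply (abstract_main lam w dw ddw q T0 m (Ef n d x y lam u v du dv) (Sdf d du dv) H).
  - lra.
  - unfold m. apply Rdiv_lt_0_compat; lra.
  - intros t Ht. specialize (HM0 t ltac:(lra)). apply Rabs_lt_between in HM0.
    destruct (HM t k ltac:(lra) Hk) as [Mu Mv].
    assert (Hw2 : Rabs (u t k - sigma * v t k) <= 2 * (Rabs M + 1)).
    { replace (u t k - sigma * v t k) with (u t k + - (sigma * v t k)) by ring.
      eapply Rle_trans. apply Rabs_triang. rewrite Rabs_Ropp, Rabs_mult.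
      assert (Rabs sigma = 1) by (destruct Hsig; subst; unfold Rabs; destruct (Rcase_abs _); lra).
      rewrite H0. assert (M <= Rabs M) by apply RRle_abs. lra. }
    assert (Hprod : Rabs (u t k ^ 2 - v t k ^ 2) = Rabs (w t) * Rabs (u t k - sigma * v t k)).
    { rewrite <- Rabs_mult. f_equal. unfold w. destruct Hsig; subst; ring. }
    assert (D / 2 < Rabs (w t) * (2 * (Rabs M + 1))).
    { eapply Rlt_le_trans with (Rabs (w t) * Rabs (u t k - sigma * v t k)). lra.
      apply Rmult_le_compat_l. apply Rabs_pos. auto. }
    unfold m. apply Rmult_le_reg_r with (4 * (Rabs M + 1)). lra.
    unfold Rdiv. rewrite Rmult_assoc, Rinv_l by lra. lra.
  - intros t Ht. apply (energy_der n d x y lam u v du dv ddu ddv); auto.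
  - intros t Ht. unfold Ef, Sdf. apply Rplus_le_le_0_compat; apply Rmult_le_pos.
    + unfold Rdiv. apply Rmult_le_pos; [|lra]. destruct (Nat.eq_dec n 0) as [->|Nn].
      simpl. rewrite Rinv_0. lra. left. apply Rinv_0_lt_compat, lt_0_INR. lia.
    + apply sumR_nonneg. intros; apply pow2_ge_0.
    + lra.
    + apply sumR_nonneg. intros; apply Rplus_le_le_0_compat; apply pow2_ge_0.
  - intros t Ht. unfold dw, Sdf.
    assert (du t k ^ 2 + dv t k ^ 2 <= sumR d (fun j => du t j ^ 2 + dv t j ^ 2)).
    { apply (sumR_ge_term d (fun j => du t j ^ 2 + dv t j ^ 2) k); auto.
      intros; apply Rplus_le_le_0_compat; apply pow2_ge_0. }
    assert ((du t k + sigma * dv t k) ^ 2 <= 2 * (du t k ^ 2 + dv t k ^ 2)).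
    { assert (0 <= (du t k - sigma * dv t k) ^ 2) by apply pow2_ge_0.
      destruct Hsig; subst; simpl in *; nra. }
    lra.
Qed.
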